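(* For every $a\geq 0$, the space $\mathcal{A}_a$ has the following properties: (i) the set of all polynomials is dense in $\mathcal{A}_a$; (ii) on every bounded subset $B\subset \mathcal{A}_a$, the relative topology induced by the topology $\mathcal{T}_a$ coincides with the relative topology of uniform convergence on compact subsets of $\mathbb{C}$; (iii) for every $b\geq 0$, every $f\in \mathcal{A}_a$ and every $g\in\mathcal{A}_b$, the product $fg$ belongs to $\mathcal{A}_{a+b}$.
   Context: Let $\mathcal{E}$ denote the set of all entire functions $\mathbb{C}\to\mathbb{C}$. For $b>0$ and $f\in\mathcal{E}$ put $\|f\|_b=\sup_{k\in\mathbb{N}_0} b^{-k}|f^{(k)}(0)|$, where $\mathbb{N}_0=\{0,1,2,\dots\}$. For $a\geq 0$ let $\mathcal{A}_a=\{f\in\mathcal{E}: \|f\|_b<\infty \text{ for all } b>a\}$, equipped with the locally convex topology $\mathcal{T}_a$ generated by the family of norms $\{\|\cdot\|_b: b>a\}$. A subset $B\subset\mathcal{A}_a$ is bounded in $\mathcal{A}_a$ if for every $b>a$ there is $C_b$ with $\sup_{f\in B}\|f\|_b\leq C_b$. *)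

(* Defs.v *)
(* C = Coquelicot complex numbers; derivatives
   of functions C -> C are taken over the absolute ring C_AbsRing, i.e. they
   are genuine complex derivatives. *)
From Stdlib Require Import Reals ClassicalEpsilon.
From Coquelicot Require Import Coquelicot.
Open Scope R_scope.

Definition entire (f : C -> C) : Prop :=
  forall z : C, @ex_derive C_AbsRing C_NormedModule f z.

(* the complex derivative (meaningful where it exists; chosen by epsilon) *)
Definition Cderiv (f : C -> C) : C -> C :=
  fun z => epsilon (inhabits (0%R, 0%R) : inhabited C)
             (fun l : C => @is_derive C_AbsRing C_NormedModule f z l).

Definition Cderiv_n (k : nat) (f : C -> C) : C -> C := Nat.iter k Cderiv f.

Definition normb (b : R) (f : C -> C) : Rbar :=
  Lub_Rbar (fun x : R => exists k : nat,
              x = Cmod (Cderiv_n k f (0%R, 0%R)) / b ^ k).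

Definition A_space (a : R) (f : C -> C) : Prop :=
  entire f /\ forall b : R, a < b -> Rbar_lt (normb b f) p_infty.

Definition Csub_fun (f g : C -> C) : C -> C := fun z => Cminus (f z) (g z).
Definition Cmul_fun (f g : C -> C) : C -> C := fun z => Cmult (f z) (g z).

Definition is_polynomial (p : C -> C) : Prop :=
  exists (n : nat) (c : nat -> C),
    forall z : C, p z = sum_n (fun k => Cmult (c k) (pow_n z k)) n.

(* basic T_a-neighbourhood condition: g lies in the finite intersection of
   the balls {g : ||g - f||_b < eps}, b in bs *)
Definition Ta_close (bs : list R) (eps : R) (f g : C -> C) : Prop :=
  List.Forall (fun b => Rbar_lt (normb b (Csub_fun g f)) (Finite eps)) bs.

Definition sup_disc (r : R) (h : C -> C) : Rbar :=
  Lub_Rbar (fun x : R => exists z : C, Cmod z <= r /\ x = Cmod (h z)).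

(* basic neighbourhood for uniform convergence on compact sets (discs are
   cofinal among compact subsets of C) *)
Definition cc_close (r eps : R) (f g : C -> C) : Prop :=
  Rbar_lt (sup_disc r (Csub_fun g f)) (Finite eps).

Definition bounded_in_A (a : R) (B : (C -> C) -> Prop) : Prop :=
  (forall f, B f -> A_space a f) /\
  forall b : R, a < b -> exists Cb : R, forall f, B f -> Rbar_le (normb b f) (Finite Cb).

(* Main.v *)
Require Import Defs.
From Stdlib Require Import Reals Lra Lia ClassicalEpsilon FunctionalExtensionality Factorial.
From Coquelicot Require Import Coquelicot.
Open Scope R_scope.

Definition CD (f : C -> C) (z l : C) : Prop :=
  forall eps, 0 < eps -> exists del, 0 < del /\ forall w, Cmod (w - z) < del ->
    Cmod (f w - f z - l * (w - z)) <= eps * Cmod (w - z).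

Definition Ccont (f : C -> C) (z : C) : Prop :=
  forall eps, 0 < eps -> exists del, 0 < del /\ forall w, Cmod (w - z) < del ->
    Cmod (f w - f z) < eps.

Definition RD (f : R -> C) (t : R) (l : C) : Prop :=
  forall eps, 0 < eps -> exists del, 0 < del /\ forall s, Rabs (s - t) < del ->
    Cmod (f s - f t - RtoC (s - t) * l) <= eps * Rabs (s - t).

Definition Rcont (f : R -> C) (t : R) : Prop :=
  forall eps, 0 < eps -> exists del, 0 < del /\ forall s, Rabs (s - t) < del ->
    Cmod (f s - f t) < eps.

Lemma Cmod_le_sum (z : C) : Cmod z <= Rabs (fst z) + Rabs (snd z).
Proof.
  destruct z as [x y]; unfold Cmod; cbn [fst snd].
  rewrite <- (sqrt_Rsqr (Rabs x + Rabs y)) by (generalize (Rabs_pos x) (Rabs_pos y); lra).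
  apply sqrt_le_1_alt. unfold Rsqr.
  generalize (Rabs_pos x) (Rabs_pos y); intros.
  rewrite <- (pow2_abs x), <- (pow2_abs y). nra.
Qed.

Lemma fst_le_Cmod (z : C) : Rabs (fst z) <= Cmod z.
Proof. apply re_le_Cmod. Qed.
Lemma snd_le_Cmod (z : C) : Rabs (snd z) <= Cmod z.
Proof. destruct z as [x y]. unfold Cmod; simpl.
  rewrite <- sqrt_Rsqr_abs. apply sqrt_le_1_alt. unfold Rsqr. nra. Qed.

Lemma Cmod_minus_sym (x y : C) : Cmod (x - y) = Cmod (y - x).
Proof. rewrite <- Cmod_opp. f_equal. ring. Qed.

Lemma Cmod_rev_tri (x y : C) : Cmod x - Cmod y <= Cmod (x - y).
Proof.
  generalize (Cmod_triangle (x - y) y). replace (x - y + y)%C with x by ring. lra.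
Qed.

Lemma Cmod_tri3 (x y : C) : Cmod (x - y) <= Cmod x + Cmod y.
Proof. unfold Cminus. rewrite <- (Cmod_opp y). apply Cmod_triangle. Qed.

Lemma locally_C_intro (z : C) (P : C -> Prop) :
  (exists del, 0 < del /\ forall w, Cmod (w - z) < del -> P w) ->
  @locally C_UniformSpace z P.
Proof.
  intros [del [Hd H]]. exists (mkposreal (del/2) ltac:(lra)). intros w [H1 H2].
  apply H. eapply Rle_lt_trans. apply Cmod_le_sum.
  unfold ball in H1, H2; simpl in H1, H2. unfold AbsRing_ball, abs, minus, plus, opp in H1, H2; simpl in H1, H2.
  destruct w as [w1 w2]; destruct z as [z1 z2]; simpl in *. lra.
Qed.

Lemma locally_C_elim (z : C) (P : C -> Prop) :
  @locally C_UniformSpace z P ->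
  exists del, 0 < del /\ forall w, Cmod (w - z) < del -> P w.
Proof.
  intros [[e He] H]. exists e. split; auto. intros w Hw. apply H.
  split; unfold ball; simpl; unfold AbsRing_ball, abs, minus, plus, opp; simpl.
  - eapply Rle_lt_trans; [|apply Hw]. destruct w, z. apply (fst_le_Cmod ((r - r1)%R, (r0 - r2)%R)).
  - eapply Rle_lt_trans; [|apply Hw]. destruct w, z. apply (snd_le_Cmod ((r - r1)%R, (r0 - r2)%R)).
Qed.

Lemma locallyA_intro (z : C) (P : C -> Prop) :
  (exists del, 0 < del /\ forall w, Cmod (w - z) < del -> P w) ->
  @locally (AbsRing_UniformSpace C_AbsRing) z P.
Proof.
  intros [del [Hd H]]. exists (mkposreal del Hd). intros w Hw. apply H. exact Hw.
Qed.

Lemma locallyA_elim (z : C) (P : C -> Prop) :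
  @locally (AbsRing_UniformSpace C_AbsRing) z P ->
  exists del, 0 < del /\ forall w, Cmod (w - z) < del -> P w.
Proof.
  intros [[e He] H]. exists e. split; auto.
Qed.

Lemma is_derive_CD (f : C -> C) z l :
  @is_derive C_AbsRing C_NormedModule f z l -> CD f z l.
Proof.
  intros [_ Hd] eps He.
  assert (Hl : is_filter_lim (@locally (AbsRing_UniformSpace C_AbsRing) z) z) by (intros P HP; exact HP).
  specialize (Hd z Hl (mkposreal eps He)).
  apply locallyA_elim in Hd. destruct Hd as [del [Hdel Hd]].
  exists del; split; auto. intros w Hw. specialize (Hd w Hw).
  replace (l * (w - z))%C with ((w - z) * l)%C by ring. exact Hd.
Qed.

Lemma CD_is_derive (f : C -> C) z l :
  CD f z l -> @is_derive C_AbsRing C_NormedModule f z l.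
Proof.
  intros H. split.
  - apply is_linear_scal_l.
  - intros x Hx. apply (@is_filter_lim_locally_unique C_AbsRing (AbsRing_NormedModule C_AbsRing)) in Hx. subst x.
    intros [e He]. apply locallyA_intro.
    destruct (H e He) as [del [Hdel Hd]]. exists del; split; auto.
    intros w Hw. specialize (Hd w Hw).
    replace (l * (w - z))%C with ((w - z) * l)%C in Hd by ring. exact Hd.
Qed.

Lemma is_deriveA_CD (f : C -> C) z l :
  @is_derive C_AbsRing (AbsRing_NormedModule C_AbsRing) f z l -> CD f z l.
Proof.
  intros [_ Hd] eps He.
  assert (Hl : is_filter_lim (@locally (AbsRing_UniformSpace C_AbsRing) z) z) by (intros P HP; exact HP).
  specialize (Hd z Hl (mkposreal eps He)).
  apply locallyA_elim in Hd. destruct Hd as [del [Hdel Hd]].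
  exists del; split; auto. intros w Hw. specialize (Hd w Hw).
  replace (l * (w - z))%C with ((w - z) * l)%C by ring. exact Hd.
Qed.

Lemma CD_is_deriveA (f : C -> C) z l :
  CD f z l -> @is_derive C_AbsRing (AbsRing_NormedModule C_AbsRing) f z l.
Proof.
  intros H. split.
  - apply is_linear_scal_l.
  - intros x Hx. apply (@is_filter_lim_locally_unique C_AbsRing (AbsRing_NormedModule C_AbsRing)) in Hx. subst x.
    intros [e He]. apply locallyA_intro.
    destruct (H e He) as [del [Hdel Hd]]. exists del; split; auto.
    intros w Hw. specialize (Hd w Hw).
    replace (l * (w - z))%C with ((w - z) * l)%C in Hd by ring. exact Hd.
Qed.

Lemma CD_const (c z : C) : CD (fun _ => c) z 0.
Proof. apply is_deriveA_CD. apply (@is_derive_const C_AbsRing (AbsRing_NormedModule C_AbsRing)). Qed.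

Lemma CD_id (z : C) : CD (fun w => w) z 1.
Proof. apply is_deriveA_CD. apply (@is_derive_id C_AbsRing). Qed.

Lemma CD_plus f g z a b : CD f z a -> CD g z b -> CD (fun w => f w + g w)%C z (a + b)%C.
Proof.
  intros H1 H2. apply is_deriveA_CD.
  apply (@is_derive_plus C_AbsRing (AbsRing_NormedModule C_AbsRing)); now apply CD_is_deriveA.
Qed.

Lemma CD_minus f g z a b : CD f z a -> CD g z b -> CD (fun w => f w - g w)%C z (a - b)%C.
Proof.
  intros H1 H2. apply is_deriveA_CD.
  apply (@is_derive_minus C_AbsRing (AbsRing_NormedModule C_AbsRing)); now apply CD_is_deriveA.
Qed.

Lemma CD_mult f g z a b : CD f z a -> CD g z b -> CD (fun w => f w * g w)%C z (a * g z + f z * b)%C.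
Proof.
  intros H1 H2. apply is_deriveA_CD.
  apply (@is_derive_mult C_AbsRing); try now apply CD_is_deriveA.
  intros; apply Cmult_comm.
Qed.

Lemma CD_comp f g z a b : CD f (g z) a -> CD g z b -> CD (fun w => f (g w)) z (b * a)%C.
Proof.
  intros H1 H2. apply is_deriveA_CD.
  apply (@is_derive_comp C_AbsRing (AbsRing_NormedModule C_AbsRing)); now apply CD_is_deriveA.
Qed.

Lemma CD_ext f g z a : (forall w, f w = g w) -> CD f z a -> CD g z a.
Proof. intros E H eps He. destruct (H eps He) as [d [Hd H']]. exists d; split; auto.
  intros w Hw. rewrite <- !E. auto. Qed.

Lemma CD_ext_loc f g z a r : 0 < r -> (forall w, Cmod (w - z) < r -> f w = g w) -> CD f z a -> CD g z a.
Proof.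
  intros Hr E H eps He. destruct (H eps He) as [d [Hd H']]. exists (Rmin d r); split.
  apply Rmin_pos; auto.
  intros w Hw. assert (Cmod (w - z) < d) by (eapply Rlt_le_trans; [apply Hw| apply Rmin_l]).
  assert (Cmod (w - z) < r) by (eapply Rlt_le_trans; [apply Hw| apply Rmin_r]).
  rewrite <- !E; auto. replace (z - z)%C with (RtoC 0) by ring. rewrite Cmod_0; auto.
Qed.

Lemma CD_scal c f z a : CD f z a -> CD (fun w => c * f w)%C z (c * a)%C.
Proof.
  intros H. replace (c * a)%C with (0 * f z + c * a)%C by ring.
  apply (CD_mult (fun _ => c) f z 0 a (CD_const c z) H).
Qed.

Lemma CD_inv0 (u : C) : u <> RtoC 0 -> CD (fun w => / w)%C u (- / (u * u))%C.
Proof.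
  intros Hu eps He.
  assert (Hm : 0 < Cmod u) by (apply Cmod_gt_0 in Hu; auto).
  exists (Rmin (Cmod u / 2) (eps * (Cmod u * Cmod u * Cmod u) / 2)). split.
  { assert (0 < Cmod u * Cmod u * Cmod u) by (repeat apply Rmult_lt_0_compat; auto).
    apply Rmin_pos. lra. apply Rdiv_lt_0_compat; [|lra]. apply Rmult_lt_0_compat; auto. }
  intros w Hw.
  assert (H1 : Cmod (w - u) < Cmod u / 2) by (eapply Rlt_le_trans; [apply Hw| apply Rmin_l]).
  assert (H2 : Cmod (w - u) < eps * (Cmod u * Cmod u * Cmod u) / 2) by (eapply Rlt_le_trans; [apply Hw| apply Rmin_r]).
  assert (Hw1 : Cmod u / 2 <= Cmod w).
  { generalize (Cmod_rev_tri u w). rewrite Cmod_minus_sym. lra. }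
  assert (Hw0 : w <> RtoC 0). { intro E; subst. rewrite Cmod_0 in Hw1. lra. }
  replace (/ w - / u - - / (u * u) * (w - u))%C with ((w - u) * (w - u) / (w * (u * u)))%C.
  2:{ field. split; auto. }
  unfold Cdiv. rewrite !Cmod_mult, Cmod_inv, !Cmod_mult.
  2:{ repeat apply Cmult_neq_0; auto. }
  set (m := Cmod (w - u)) in *.
  assert (0 <= m) by apply Cmod_ge_0.
  apply Rle_trans with (m * m * / (Cmod u / 2 * (Cmod u * Cmod u))).
  - apply Rmult_le_compat_l. nra. apply Rinv_le_contravar. 
    apply Rmult_lt_0_compat; nra. apply Rmult_le_compat_r; nra.
  - replace (m * m * / (Cmod u / 2 * (Cmod u * Cmod u))) with (m * (2 * m / (Cmod u * Cmod u * Cmod u))) by (field; lra).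
    rewrite (Rmult_comm eps m). apply Rmult_le_compat_l; auto.
    assert (Hu3 : 0 < Cmod u * Cmod u * Cmod u) by (repeat apply Rmult_lt_0_compat; auto).
    set (u3 := Cmod u * Cmod u * Cmod u) in *.
    replace eps with ((eps * u3) * / u3) by (field; lra). unfold Rdiv.
    apply Rmult_le_compat_r. left; apply Rinv_0_lt_compat; auto. lra.
Qed.

Lemma CD_eql f z a b : CD f z a -> a = b -> CD f z b.
Proof. intros H E; subst; auto. Qed.

Lemma CD_unique f z a b : CD f z a -> CD f z b -> a = b.
Proof.
  intros Ha Hb.
  destruct (Req_dec (Cmod (a - b)) 0) as [E|E].
  { apply Cmod_eq_0 in E. apply Ceq_minus in E; auto. }
  exfalso. assert (Hp : 0 < Cmod (a - b)) by (generalize (Cmod_ge_0 (a - b)); lra).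
  set (e := Cmod (a - b) / 4).
  destruct (Ha e ltac:(unfold e; lra)) as [d1 [Hd1 H1]].
  destruct (Hb e ltac:(unfold e; lra)) as [d2 [Hd2 H2]].
  set (h := Rmin d1 d2 / 2).
  assert (Hh : 0 < h) by (unfold h; generalize (Rmin_pos _ _ Hd1 Hd2); lra).
  assert (Hh1 : Cmod ((z + RtoC h) - z) = h).
  { replace (z + RtoC h - z)%C with (RtoC h) by ring. rewrite Cmod_R. apply Rabs_pos_eq; lra. }
  assert (Hlt1 : h < d1) by (unfold h; generalize (Rmin_l d1 d2); lra).
  assert (Hlt2 : h < d2) by (unfold h; generalize (Rmin_r d1 d2); lra).
  specialize (H1 (z + RtoC h)%C ltac:(rewrite Hh1; lra)).
  specialize (H2 (z + RtoC h)%C ltac:(rewrite Hh1; lra)).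
  rewrite Hh1 in H1, H2.
  set (w := (z + RtoC h)%C) in *.
  assert (Cmod ((a - b) * (w - z)) <= 2 * e * h).
  { replace ((a - b) * (w - z))%C with ((f w - f z - b * (w - z)) - (f w - f z - a * (w - z)))%C by ring.
    eapply Rle_trans. apply Cmod_tri3. lra. }
  rewrite Cmod_mult, Hh1 in H. unfold e in H. nra.
Qed.

Lemma Cderiv_eq f z l : CD f z l -> Cderiv f z = l.
Proof.
  intros H. unfold Cderiv.
  assert (Hex : exists l, @is_derive C_AbsRing C_NormedModule f z l) by (exists l; now apply CD_is_derive).
  generalize (epsilon_spec (inhabits (0%R, 0%R) : inhabited C) _ Hex). intros H2.
  apply is_derive_CD in H2. eapply CD_unique; eauto.
Qed.

Definition hol (f : C -> C) := forall z, exists l, CD f z l.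

Lemma entire_hol f : entire f <-> hol f.
Proof.
  split; intros H z; destruct (H z) as [l Hl].
  - exists l. now apply is_derive_CD.
  - exists l. now apply CD_is_derive.
Qed.

Lemma hol_Cderiv f z : hol f -> CD f z (Cderiv f z).
Proof. intros H. destruct (H z) as [l Hl]. rewrite (Cderiv_eq f z l Hl). auto. Qed.

Lemma CD_Ccont f z l : CD f z l -> Ccont f z.
Proof.
  intros H eps He.
  destruct (H 1 Rlt_0_1) as [d [Hd H1]].
  exists (Rmin d (eps / (Cmod l + 2))). split.
  { apply Rmin_pos; auto. apply Rdiv_lt_0_compat; auto. generalize (Cmod_ge_0 l); lra. }
  intros w Hw.
  assert (Hw1 : Cmod (w - z) < d) by (eapply Rlt_le_trans; [apply Hw| apply Rmin_l]).
  assert (Hw2 : Cmod (w - z) < eps / (Cmod l + 2)) by (eapply Rlt_le_trans; [apply Hw| apply Rmin_r]).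
  specialize (H1 w Hw1).
  replace (f w - f z)%C with ((f w - f z - l * (w - z)) + l * (w - z))%C by ring.
  eapply Rle_lt_trans. apply Cmod_triangle. rewrite Cmod_mult.
  generalize (Cmod_ge_0 l) (Cmod_ge_0 (w - z)); intros.
  apply Rle_lt_trans with ((Cmod l + 1) * Cmod (w - z)). nra.
  apply Rle_lt_trans with ((Cmod l + 2) * Cmod (w - z)). nra.
  apply (Rmult_lt_compat_l (Cmod l + 2)) in Hw2; [|lra].
  replace ((Cmod l + 2) * (eps / (Cmod l + 2))) with eps in Hw2 by (field; lra). lra.
Qed.

Lemma CD_pow n u : CD (fun w => w ^ n)%C u (RtoC (INR n) * u ^ (pred n))%C.
Proof.
  induction n.
  - simpl. replace (RtoC 0 * 1)%C with (RtoC 0) by ring. apply CD_const.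
  - eapply CD_eql; [apply (CD_mult (fun w => w) (fun w => w ^ n)%C u 1 _ (CD_id u) IHn)|].
    rewrite S_INR, RtoC_plus. destruct n; simpl. ring. ring.
Qed.

Lemma RD_eql f t a b : RD f t a -> a = b -> RD f t b.
Proof. intros H E; subst; auto. Qed.

Lemma RD_Rcont f t l : RD f t l -> Rcont f t.
Proof.
  intros H eps He.
  destruct (H 1 Rlt_0_1) as [d [Hd H1]].
  exists (Rmin d (eps / (Cmod l + 2))). split.
  { apply Rmin_pos; auto. apply Rdiv_lt_0_compat; auto. generalize (Cmod_ge_0 l); lra. }
  intros s Hs.
  assert (Hw1 : Rabs (s - t) < d) by (eapply Rlt_le_trans; [apply Hs| apply Rmin_l]).
  assert (Hw2 : Rabs (s - t) < eps / (Cmod l + 2)) by (eapply Rlt_le_trans; [apply Hs| apply Rmin_r]).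
  specialize (H1 s Hw1).
  replace (f s - f t)%C with ((f s - f t - RtoC (s - t) * l) + RtoC (s - t) * l)%C by ring.
  eapply Rle_lt_trans. apply Cmod_triangle. rewrite Cmod_mult, Cmod_R.
  generalize (Cmod_ge_0 l) (Rabs_pos (s - t)); intros.
  apply Rle_lt_trans with ((Cmod l + 1) * Rabs (s - t)). nra.
  apply Rle_lt_trans with ((Cmod l + 2) * Rabs (s - t)). nra.
  apply (Rmult_lt_compat_l (Cmod l + 2)) in Hw2; [|lra].
  replace ((Cmod l + 2) * (eps / (Cmod l + 2))) with eps in Hw2 by (field; lra). lra.
Qed.

Lemma RD_comp (F : C -> C) (w : R -> C) t a b :
  CD F (w t) a -> RD w t b -> RD (fun s => F (w s)) t (a * b)%C.
Proof.
  intros HF Hw eps He.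
  set (K := Cmod b + 1).
  assert (HK : 0 < K) by (unfold K; generalize (Cmod_ge_0 b); lra).
  set (A := Cmod a + 1).
  assert (HA : 0 < A) by (unfold A; generalize (Cmod_ge_0 a); lra).
  destruct (HF (eps / (2 * K)) ltac:(apply Rdiv_lt_0_compat; lra)) as [d1 [Hd1 H1]].
  destruct (Hw 1 Rlt_0_1) as [d2 [Hd2 H2]].
  destruct (Hw (eps / (2 * A)) ltac:(apply Rdiv_lt_0_compat; lra)) as [d3 [Hd3 H3]].
  exists (Rmin (Rmin d2 d3) (d1 / K)). split.
  { repeat apply Rmin_pos; auto. apply Rdiv_lt_0_compat; auto. }
  intros s Hs.
  assert (Hs2 : Rabs (s - t) < d2) by (eapply Rlt_le_trans; [apply Hs|]; eapply Rle_trans; [apply Rmin_l|apply Rmin_l]).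
  assert (Hs3 : Rabs (s - t) < d3) by (eapply Rlt_le_trans; [apply Hs|]; eapply Rle_trans; [apply Rmin_l|apply Rmin_r]).
  assert (Hs1 : Rabs (s - t) < d1 / K) by (eapply Rlt_le_trans; [apply Hs|apply Rmin_r]).
  specialize (H2 s Hs2). specialize (H3 s Hs3).
  assert (Hws : Cmod (w s - w t) <= K * Rabs (s - t)).
  { replace (w s - w t)%C with ((w s - w t - RtoC (s - t) * b) + RtoC (s - t) * b)%C by ring.
    eapply Rle_trans. apply Cmod_triangle. rewrite Cmod_mult, Cmod_R. unfold K. lra. }
  assert (Hws1 : Cmod (w s - w t) < d1).
  { eapply Rle_lt_trans. apply Hws. apply (Rmult_lt_compat_l K) in Hs1; auto.
    replace (K * (d1 / K)) with d1 in Hs1 by (field; lra). lra. }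
  specialize (H1 (w s) Hws1).
  replace (F (w s) - F (w t) - RtoC (s - t) * (a * b))%C with
    ((F (w s) - F (w t) - a * (w s - w t)) + a * (w s - w t - RtoC (s - t) * b))%C by ring.
  eapply Rle_trans. apply Cmod_triangle. rewrite Cmod_mult.
  assert (E1 : eps / (2 * K) * Cmod (w s - w t) <= eps / 2 * Rabs (s - t)).
  { apply Rle_trans with (eps / (2 * K) * (K * Rabs (s - t))).
    apply Rmult_le_compat_l; auto. left; apply Rdiv_lt_0_compat; lra.
    right; field; lra. }
  assert (E2 : Cmod a * Cmod (w s - w t - RtoC (s - t) * b) <= eps / 2 * Rabs (s - t)).
  { apply Rle_trans with (A * (eps / (2 * A) * Rabs (s - t))).
    apply Rmult_le_compat; auto using Cmod_ge_0. unfold A; lra.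
    right; field; lra. }
  lra.
Qed.

Lemma RD_plus f g t a b : RD f t a -> RD g t b -> RD (fun s => f s + g s)%C t (a + b)%C.
Proof.
  intros Hf Hg eps He.
  destruct (Hf (eps/2) ltac:(lra)) as [d1 [Hd1 H1]].
  destruct (Hg (eps/2) ltac:(lra)) as [d2 [Hd2 H2]].
  exists (Rmin d1 d2); split. apply Rmin_pos; auto.
  intros s Hs. specialize (H1 s ltac:(eapply Rlt_le_trans; [apply Hs|apply Rmin_l])).
  specialize (H2 s ltac:(eapply Rlt_le_trans; [apply Hs|apply Rmin_r])).
  replace (f s + g s - (f t + g t) - RtoC (s - t) * (a + b))%C with
    ((f s - f t - RtoC (s - t) * a) + (g s - g t - RtoC (s - t) * b))%C by ring.
  eapply Rle_trans. apply Cmod_triangle. lra.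
Qed.

Lemma RD_const c t : RD (fun _ => c) t 0.
Proof.
  intros eps He. exists 1. split. lra. intros s _.
  replace (c - c - RtoC (s - t) * 0)%C with (RtoC 0) by ring. rewrite Cmod_0.
  generalize (Rabs_pos (s - t)); nra.
Qed.

Lemma RD_RtoC t : RD (fun s => RtoC s) t 1.
Proof.
  intros eps He. exists 1. split. lra. intros s _.
  replace (RtoC s - RtoC t - RtoC (s - t) * 1)%C with (RtoC 0) by (rewrite RtoC_minus; ring). rewrite Cmod_0.
  generalize (Rabs_pos (s - t)); nra.
Qed.

Lemma derivable_pt_lim_bound g t L : derivable_pt_lim g t L ->
  forall eps, 0 < eps -> exists d, 0 < d /\ forall s, Rabs (s - t) < d ->
    Rabs (g s - g t - (s - t) * L) <= eps * Rabs (s - t).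
Proof.
  intros H eps He. destruct (H eps He) as [[d Hd] H1]. exists d; split; auto.
  intros s Hs. destruct (Req_dec s t) as [E|E].
  { subst. replace (g t - g t - (t - t) * L) with 0 by ring. rewrite Rminus_diag, !Rabs_R0. lra. }
  assert (Hh : s - t <> 0) by lra.
  specialize (H1 (s - t) Hh Hs). replace (t + (s - t)) with s in H1 by ring.
  replace (g s - g t - (s - t) * L) with ((s - t) * ((g s - g t) / (s - t) - L)) by (field; auto).
  rewrite Rabs_mult. rewrite Rmult_comm. apply Rmult_le_compat_r. apply Rabs_pos. lra.
Qed.

Lemma RD_pair (f : R -> C) t (l : C) :
  derivable_pt_lim (fun s => fst (f s)) t (fst l) ->
  derivable_pt_lim (fun s => snd (f s)) t (snd l) -> RD f t l.
Proof.
  intros H1 H2 eps He.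
  destruct (derivable_pt_lim_bound _ _ _ H1 (eps/2) ltac:(lra)) as [d1 [Hd1 G1]].
  destruct (derivable_pt_lim_bound _ _ _ H2 (eps/2) ltac:(lra)) as [d2 [Hd2 G2]].
  exists (Rmin d1 d2); split. apply Rmin_pos; auto.
  intros s Hs. specialize (G1 s ltac:(eapply Rlt_le_trans; [apply Hs|apply Rmin_l])).
  specialize (G2 s ltac:(eapply Rlt_le_trans; [apply Hs|apply Rmin_r])).
  eapply Rle_trans. apply Cmod_le_sum.
  destruct (f s) as [a1 a2]; destruct (f t) as [b1 b2]; destruct l as [l1 l2]; simpl in *.
  replace (a1 + - b1 + - ((s - t) * l1 - 0 * l2)) with (a1 - b1 - (s - t) * l1) by ring.
  replace (a2 + - b2 + - ((s - t) * l2 + 0 * l1)) with (a2 - b2 - (s - t) * l2) by ring.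
  lra.
Qed.

Definition circ (r : R) (t : R) : C := (r * cos t, r * sin t).

Lemma RD_circ r t : RD (circ r) t (Ci * circ r t)%C.
Proof.
  apply RD_pair; unfold circ; simpl.
  - replace (0 * (r * cos t) - 1 * (r * sin t)) with (r * - sin t) by ring.
    apply derivable_pt_lim_scal. apply derivable_pt_lim_cos.
  - replace (0 * (r * sin t) + 1 * (r * cos t)) with (r * cos t) by ring.
    apply derivable_pt_lim_scal. apply derivable_pt_lim_sin.
Qed.

Lemma Cmod_circ r t : 0 <= r -> Cmod (circ r t) = r.
Proof.
  intros Hr. unfold circ, Cmod; simpl.
  replace (r * cos t * (r * cos t * 1) + r * sin t * (r * sin t * 1)) with (r * r * (Rsqr (sin t) + Rsqr (cos t))) by (unfold Rsqr; ring).
  rewrite sin2_cos2. rewrite Rmult_1_r. apply sqrt_square; auto.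
Qed.

Lemma circ_2PI r : circ r (2 * PI) = circ r 0.
Proof. unfold circ. rewrite cos_2PI, sin_2PI, cos_0, sin_0. auto. Qed.

Lemma Rcont_plus f g t : Rcont f t -> Rcont g t -> Rcont (fun s => f s + g s)%C t.
Proof.
  intros Hf Hg eps He.
  destruct (Hf (eps/2) ltac:(lra)) as [d1 [Hd1 H1]].
  destruct (Hg (eps/2) ltac:(lra)) as [d2 [Hd2 H2]].
  exists (Rmin d1 d2); split. apply Rmin_pos; auto.
  intros s Hs. specialize (H1 s ltac:(eapply Rlt_le_trans; [apply Hs|apply Rmin_l])).
  specialize (H2 s ltac:(eapply Rlt_le_trans; [apply Hs|apply Rmin_r])).
  replace (f s + g s - (f t + g t))%C with ((f s - f t) + (g s - g t))%C by ring.
  eapply Rle_lt_trans. apply Cmod_triangle. lra.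
Qed.

Lemma Rcont_const c t : Rcont (fun _ => c) t.
Proof. intros eps He. exists 1; split. lra. intros. replace (c - c)%C with (RtoC 0) by ring. rewrite Cmod_0; auto. Qed.

Lemma Rcont_mult f g t : Rcont f t -> Rcont g t -> Rcont (fun s => f s * g s)%C t.
Proof.
  intros Hf Hg eps He.
  set (A := Cmod (f t) + 1). set (B := Cmod (g t) + 1).
  assert (HA : 0 < A) by (unfold A; generalize (Cmod_ge_0 (f t)); lra).
  assert (HB : 0 < B) by (unfold B; generalize (Cmod_ge_0 (g t)); lra).
  destruct (Hf (Rmin 1 (eps / (3 * B))) ltac:(apply Rmin_pos; [lra|apply Rdiv_lt_0_compat; lra])) as [d1 [Hd1 H1]].
  destruct (Hg (eps / (3 * A)) ltac:(apply Rdiv_lt_0_compat; lra)) as [d2 [Hd2 H2]].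
  exists (Rmin d1 d2); split. apply Rmin_pos; auto.
  intros s Hs. specialize (H1 s ltac:(eapply Rlt_le_trans; [apply Hs|apply Rmin_l])).
  specialize (H2 s ltac:(eapply Rlt_le_trans; [apply Hs|apply Rmin_r])).
  assert (H1a : Cmod (f s - f t) < 1) by (eapply Rlt_le_trans; [apply H1|apply Rmin_l]).
  assert (H1b : Cmod (f s - f t) < eps / (3 * B)) by (eapply Rlt_le_trans; [apply H1|apply Rmin_r]).
  assert (Hfs : Cmod (f s) <= A).
  { replace (f s) with ((f s - f t) + f t)%C by ring. eapply Rle_trans. apply Cmod_triangle. unfold A; lra. }
  replace (f s * g s - f t * g t)%C with (f s * (g s - g t) + (f s - f t) * g t)%C by ring.
  eapply Rle_lt_trans. apply Cmod_triangle. rewrite !Cmod_mult.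
  assert (E1 : Cmod (f s) * Cmod (g s - g t) <= A * (eps / (3 * A))).
  { apply Rmult_le_compat; auto using Cmod_ge_0; lra. }
  assert (E2 : Cmod (f s - f t) * Cmod (g t) <= eps / (3 * B) * B).
  { apply Rmult_le_compat; auto using Cmod_ge_0; try lra. unfold B; lra. }
  replace (A * (eps / (3 * A))) with (eps/3) in E1 by (field; lra).
  replace (eps / (3 * B) * B) with (eps/3) in E2 by (field; lra).
  lra.
Qed.

Lemma Rcont_comp (F : C -> C) (w : R -> C) t : Ccont F (w t) -> Rcont w t -> Rcont (fun s => F (w s)) t.
Proof.
  intros HF Hw eps He. destruct (HF eps He) as [d1 [Hd1 H1]].
  destruct (Hw d1 Hd1) as [d2 [Hd2 H2]]. exists d2; split; auto.
Qed.

Lemma Rcont_minus f g t : Rcont f t -> Rcont g t -> Rcont (fun s => f s - g s)%C t.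
Proof.
  intros Hf Hg. unfold Cminus.
  apply Rcont_plus; auto.
  replace (fun s => - g s)%C with (fun s => (RtoC (-1)) * g s)%C.
  apply Rcont_mult; auto. apply Rcont_const.
  apply functional_extensionality; intros; ring.
Qed.

Lemma Rcont_continuous (f : R -> C) t : Rcont f t -> @continuous R_UniformSpace C_R_CompleteNormedModule f t.
Proof.
  intros H. apply filterlim_locally. intros [e He].
  destruct (H e He) as [d [Hd H1]]. exists (mkposreal d Hd). intros s Hs.
  specialize (H1 s Hs). split; unfold ball; simpl; unfold AbsRing_ball, abs, minus, plus, opp; simpl.
  - eapply Rle_lt_trans; [|apply H1]. destruct (f s), (f t). apply (fst_le_Cmod ((r - r1)%R, (r0 - r2)%R)).
  - eapply Rle_lt_trans; [|apply H1]. destruct (f s), (f t). apply (snd_le_Cmod ((r - r1)%R, (r0 - r2)%R)).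
Qed.

Lemma RD_is_derive (H : R -> C) t l : RD H t l -> @is_derive R_AbsRing C_R_NormedModule H t l.
Proof.
  intros HD. split.
  - apply is_linear_scal_l.
  - intros x Hx. apply (@is_filter_lim_locally_unique R_AbsRing (AbsRing_NormedModule R_AbsRing)) in Hx. subst x.
    intros [e He]. destruct (HD e He) as [d [Hd H1]]. exists (mkposreal d Hd). intros s Hs.
    specialize (H1 s Hs). rewrite <- !Cmod_norm.
    rewrite scal_R_Cmult. exact H1.
Qed.

Definition CI (f : R -> C) (a b : R) : C := @RInt C_R_CompleteNormedModule f a b.
Definition Icont (f : R -> C) (a b : R) := forall t, Rmin a b <= t <= Rmax a b -> Rcont f t.

Lemma CI_ex f a b : Icont f a b -> @ex_RInt C_R_CompleteNormedModule f a b.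
Proof. intros H. apply ex_RInt_continuous. intros t Ht. apply Rcont_continuous. auto. Qed.

Lemma CI_is f a b : Icont f a b -> @is_RInt C_R_CompleteNormedModule f a b (CI f a b).
Proof. intros H. apply RInt_correct. now apply CI_ex. Qed.

Lemma CI_plus f g a b : Icont f a b -> Icont g a b -> CI (fun t => f t + g t)%C a b = (CI f a b + CI g a b)%C.
Proof.
  intros Hf Hg. unfold CI. apply (@is_RInt_unique C_R_CompleteNormedModule).
  apply (@is_RInt_plus C_R_CompleteNormedModule); now apply CI_is.
Qed.

Lemma CI_minus f g a b : Icont f a b -> Icont g a b -> CI (fun t => f t - g t)%C a b = (CI f a b - CI g a b)%C.
Proof.
  intros Hf Hg. unfold CI. apply (@is_RInt_unique C_R_CompleteNormedModule).
  apply (@is_RInt_minus C_R_CompleteNormedModule); now apply CI_is.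
Qed.

Lemma CI_scal c f a b : Icont f a b -> CI (fun t => c * f t)%C a b = (c * CI f a b)%C.
Proof.
  intros Hf. unfold CI at 1. apply (@is_RInt_unique C_R_CompleteNormedModule).
  generalize (CI_is f a b Hf). set (I := CI f a b). intros HI.
  assert (H1 := @is_RInt_fct_extend_fst R_NormedModule R_NormedModule f a b I HI).
  assert (H2 := @is_RInt_fct_extend_snd R_NormedModule R_NormedModule f a b I HI).
  destruct c as [c1 c2].
  replace ((c1, c2) * I)%C with ((c1 * fst I - c2 * snd I)%R, (c1 * snd I + c2 * fst I)%R).
  2:{ destruct I; unfold Cmult; simpl. f_equal; ring. }
  apply (@is_RInt_fct_extend_pair R_NormedModule R_NormedModule).
  - eapply (@is_RInt_ext R_NormedModule). 2:{ apply (@is_RInt_minus R_NormedModule).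
      apply (@is_RInt_scal R_NormedModule _ _ _ c1 _ H1). apply (@is_RInt_scal R_NormedModule _ _ _ c2 _ H2). }
    intros x _. unfold minus, plus, opp, scal; simpl. unfold mult; simpl. destruct (f x) as [p q]; simpl; ring.
  - eapply (@is_RInt_ext R_NormedModule). 2:{ apply (@is_RInt_plus R_NormedModule).
      apply (@is_RInt_scal R_NormedModule _ _ _ c1 _ H2). apply (@is_RInt_scal R_NormedModule _ _ _ c2 _ H1). }
    intros x _. unfold minus, plus, opp, scal; simpl. unfold mult; simpl. destruct (f x) as [p q]; simpl; ring.
Qed.

Lemma CI_const c a b : CI (fun _ => c) a b = (RtoC (b - a) * c)%C.
Proof. unfold CI. rewrite RInt_const. apply scal_R_Cmult. Qed.

Lemma Icont_sub f a b c d : Icont f a b -> Rmin a b <= Rmin c d -> Rmax c d <= Rmax a b -> Icont f c d.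
Proof. intros H H1 H2 t Ht. apply H. lra. Qed.

Lemma CI_Chasles f a b c : Icont f a b -> Icont f b c -> (CI f a b + CI f b c)%C = CI f a c.
Proof.
  intros H1 H2. unfold CI. apply (@RInt_Chasles C_R_CompleteNormedModule); now apply CI_ex.
Qed.

Lemma CI_swap f a b : Icont f a b -> CI f b a = (- CI f a b)%C.
Proof.
  intros H. unfold CI. rewrite <- (@opp_RInt_swap C_R_CompleteNormedModule). reflexivity.
  now apply CI_ex.
Qed.

Lemma CI_point f a : CI f a a = RtoC 0.
Proof. unfold CI. rewrite RInt_point. reflexivity. Qed.

Lemma CI_ext f g a b : (forall t, Rmin a b <= t <= Rmax a b -> f t = g t) -> CI f a b = CI g a b.
Proof. intros H. unfold CI. apply (@RInt_ext C_R_CompleteNormedModule). intros; apply H; lra. Qed.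

Lemma CI_bound f a b M : a <= b -> Icont f a b -> (forall t, a <= t <= b -> Cmod (f t) <= M) ->
  Cmod (CI f a b) <= (b - a) * M.
Proof.
  intros Hab Hf HM. rewrite Cmod_norm. apply (@norm_RInt_le_const C_R_NormedModule f a b); auto.
  intros t Ht. rewrite <- Cmod_norm. auto. now apply CI_is.
Qed.

Lemma CI_bound_gen f a b M : Icont f a b -> (forall t, Rmin a b <= t <= Rmax a b -> Cmod (f t) <= M) ->
  Cmod (CI f a b) <= Rabs (b - a) * M.
Proof.
  intros Hf HM. destruct (Rle_dec a b).
  - rewrite Rabs_pos_eq by lra. apply CI_bound; auto. intros; apply HM. rewrite Rmin_left, Rmax_right; lra.
  - assert (Hf' : Icont f b a) by (intros t Ht; apply Hf; rewrite Rmin_comm, Rmax_comm; auto).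
    rewrite (CI_swap f b a Hf'). rewrite Cmod_opp. rewrite Rabs_minus_sym, Rabs_pos_eq by lra.
    apply CI_bound; auto. lra.
    intros; apply HM. rewrite Rmin_right, Rmax_left; lra.
Qed.

Lemma FTC (H h : R -> C) a b : (forall t, Rmin a b <= t <= Rmax a b -> RD H t (h t)) -> Icont h a b ->
  CI h a b = (H b - H a)%C.
Proof.
  intros HD Hc. unfold CI. apply (@is_RInt_unique C_R_CompleteNormedModule).
  apply (@is_RInt_derive C_R_CompleteNormedModule).
  - intros t Ht. apply RD_is_derive. auto.
  - intros t Ht. apply Rcont_continuous. auto.
Qed.

Lemma circ_neq0 r t : 0 < r -> circ r t <> RtoC 0.
Proof. intros Hr E. generalize (Cmod_circ r t ltac:(lra)). rewrite E, Cmod_0. lra. Qed.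

Lemma RD_comp_cont (G : C -> C) (w : R -> C) t l :
  (exists a, CD G (w t) a) -> RD w t l -> Rcont (fun s => G (w s)) t.
Proof. intros [a Ha] Hw. eapply RD_Rcont. apply RD_comp; eauto. Qed.

Lemma circ_cont r t : Rcont (circ r) t.
Proof. eapply RD_Rcont. apply RD_circ. Qed.

Lemma circ_comp_cont (G : C -> C) r t : (exists a, CD G (circ r t) a) -> Rcont (fun s => G (circ r s)) t.
Proof. intros H. eapply RD_comp_cont; eauto. apply RD_circ. Qed.

Lemma CI_circ_deriv_zero r (F F' : C -> C) :
  (forall t, CD F (circ r t) (F' (circ r t))) ->
  (forall t, Rcont (fun s => F' (circ r s)) t) ->
  CI (fun t => F' (circ r t) * (Ci * circ r t))%C 0 (2 * PI) = RtoC 0.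
Proof.
  intros HF Hc. rewrite (FTC (fun t => F (circ r t))).
  - rewrite circ_2PI. ring.
  - intros t _. apply RD_comp; auto. apply RD_circ.
  - intros t _. apply Rcont_mult; auto. apply Rcont_mult. apply Rcont_const. apply circ_cont.
Qed.

Lemma CD_invpow n u : u <> RtoC 0 -> CD (fun w => (/ w) ^ n)%C u ((- / (u * u)) * (RtoC (INR n) * (/ u) ^ (pred n)))%C.
Proof.
  intros Hu. apply (CD_comp (fun w => w ^ n)%C (fun w => / w)%C u). apply CD_pow. apply CD_inv0; auto.
Qed.

Lemma Cpow_pred_mult (u : C) n : (0 < n)%nat -> (u ^ (pred n) * u = u ^ n)%C.
Proof. intros H. destruct n. lia. simpl. ring. Qed.

Lemma INR_C_neq0 n : (0 < n)%nat -> RtoC (INR n) <> RtoC 0.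
Proof. intros H E. apply RtoC_inj in E. apply (not_0_INR n); [lia | exact E]. Qed.

Lemma CI_circ_pow r k : 0 < r -> (0 < k)%nat -> CI (fun t => (circ r t) ^ k)%C 0 (2 * PI) = RtoC 0.
Proof.
  intros Hr Hk.
  set (c := (/ (Ci * RtoC (INR k)))%C).
  assert (Hc : (Ci * RtoC (INR k))%C <> RtoC 0) by (apply Cmult_neq_0; [apply Ci_nz|apply INR_C_neq0; auto]).
  rewrite <- (CI_circ_deriv_zero r (fun u => c * u ^ k)%C (fun u => c * (RtoC (INR k) * u ^ pred k))%C).
  - apply CI_ext. intros t _. unfold c.
    replace ((/ (Ci * INR k) * (INR k * circ r t ^ Init.Nat.pred k) * (Ci * circ r t)))%C
      with ((/ (Ci * INR k) * (Ci * INR k)) * (circ r t ^ Init.Nat.pred k * circ r t))%C by ring.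
    rewrite Cinv_l, Cpow_pred_mult; auto. ring.
  - intros t. apply CD_scal. apply CD_pow.
  - intros t. apply (circ_comp_cont (fun u => c * (RtoC (INR k) * u ^ pred k))%C).
    eexists. apply CD_scal. apply CD_mult. apply CD_const. apply CD_pow.
Qed.

Lemma Rcont_pow f t n : Rcont f t -> Rcont (fun s => (f s) ^ n)%C t.
Proof. intros H. induction n. exact (Rcont_const (RtoC 1) t). exact (Rcont_mult _ _ t H IHn). Qed.

Lemma Rcont_inv_circ r t : 0 < r -> Rcont (fun s => / circ r s)%C t.
Proof. intros Hr. apply (circ_comp_cont (fun u => / u)%C). eexists. apply CD_inv0. apply circ_neq0; auto. Qed.

Lemma CI_circ_invpow r k : 0 < r -> (0 < k)%nat -> CI (fun t => (/ circ r t) ^ k)%C 0 (2 * PI) = RtoC 0.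
Proof.
  intros Hr Hk.
  set (c := (/ (Ci * RtoC (INR k)))%C).
  assert (Hc : (Ci * RtoC (INR k))%C <> RtoC 0) by (apply Cmult_neq_0; [apply Ci_nz|apply INR_C_neq0; auto]).
  assert (Hk' : RtoC (INR k) <> RtoC 0) by (apply INR_C_neq0; auto).
  rewrite <- (CI_circ_deriv_zero r (fun u => - c * (/ u) ^ k)%C (fun u => / Ci * (/ u) ^ (S k))%C).
  - apply CI_ext. intros t _. generalize (circ_neq0 r t Hr). intros Hu.
    set (u := circ r t).
    replace (/ Ci * (/ u) ^ S k * (Ci * u))%C with ((/ Ci * Ci) * (/u) ^ k * (/ u * u))%C by (simpl; ring).
    rewrite !Cinv_l; auto. ring. apply Ci_nz.
  - intros t. generalize (circ_neq0 r t Hr). intros Hu. set (u := circ r t).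
    eapply CD_eql. apply CD_scal. apply CD_invpow; auto.
    unfold c. destruct k. lia. simpl Init.Nat.pred.
    replace (- / (Ci * INR (S k)) * (- / (u * u) * (INR (S k) * (/ u) ^ k)))%C
       with ((/ (Ci * INR (S k)) * INR (S k)) * (/ (u * u) * (/ u) ^ k))%C by ring.
    assert (E : (/ (u * u) = / u * / u)%C) by (field; auto). rewrite E.
    assert (E2 : (/ (Ci * INR (S k)) * INR (S k) = / Ci)%C) by (field; split; auto; apply Ci_nz). rewrite E2.
    simpl. ring.
  - intros t. apply Rcont_mult. apply Rcont_const. apply Rcont_pow. apply Rcont_inv_circ; auto.
Qed.

Definition hseg (g : C -> C) (y a b : R) : C := CI (fun t => g (t, y)) a b.
Definition vseg (g : C -> C) (x a b : R) : C := CI (fun s => g (x, s)) a b.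
Definition RI (g : C -> C) (x0 x1 y0 y1 : R) : C :=
  (hseg g y0 x0 x1 + Ci * vseg g x1 y0 y1 - hseg g y1 x0 x1 - Ci * vseg g x0 y0 y1)%C.
Definition Call (g : C -> C) := forall z, Ccont g z.

Lemma C_decomp (a b : R) : ((a, b) = RtoC a + Ci * RtoC b)%C.
Proof. unfold Cplus, Cmult, RtoC, Ci; simpl. f_equal; ring. Qed.

Lemma Rcont_hpath y t : Rcont (fun s => (s, y) : C) t.
Proof.
  intros eps He. exists eps; split; auto. intros s Hs.
  replace ((s, y) - (t, y))%C with (RtoC (s - t)). rewrite Cmod_R. auto.
  unfold Cminus, Cplus, Copp, RtoC; simpl. f_equal; ring.
Qed.

Lemma Rcont_vpath x t : Rcont (fun s => (x, s) : C) t.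
Proof.
  intros eps He. exists eps; split; auto. intros s Hs.
  replace ((x, s) - (x, t))%C with (Ci * RtoC (s - t))%C. rewrite Cmod_mult, Cmod_Ci, Cmod_R. lra.
  unfold Cminus, Cplus, Copp, RtoC, Cmult, Ci; simpl. f_equal; ring.
Qed.

Lemma Icont_h g y a b : Call g -> Icont (fun t => g (t, y)) a b.
Proof. intros H t _. apply (Rcont_comp g (fun s => (s, y) : C)). apply H. apply Rcont_hpath. Qed.

Lemma Icont_v g x a b : Call g -> Icont (fun s => g (x, s)) a b.
Proof. intros H t _. apply (Rcont_comp g (fun s => (x, s) : C)). apply H. apply Rcont_vpath. Qed.

Lemma RI_split_x g x0 xm x1 y0 y1 : Call g ->
  RI g x0 x1 y0 y1 = (RI g x0 xm y0 y1 + RI g xm x1 y0 y1)%C.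
Proof.
  intros H. unfold RI, hseg.
  rewrite <- (CI_Chasles (fun t => g (t, y0)) x0 xm x1) by (apply Icont_h; auto).
  rewrite <- (CI_Chasles (fun t => g (t, y1)) x0 xm x1) by (apply Icont_h; auto).
  ring.
Qed.

Lemma RI_split_y g x0 x1 y0 ym y1 : Call g ->
  RI g x0 x1 y0 y1 = (RI g x0 x1 y0 ym + RI g x0 x1 ym y1)%C.
Proof.
  intros H. unfold RI, vseg.
  rewrite <- (CI_Chasles (fun s => g (x1, s)) y0 ym y1) by (apply Icont_v; auto).
  rewrite <- (CI_Chasles (fun s => g (x0, s)) y0 ym y1) by (apply Icont_v; auto).
  ring.
Qed.

Lemma RI_minus g h x0 x1 y0 y1 : Call g -> Call h ->
  RI (fun w => g w - h w)%C x0 x1 y0 y1 = (RI g x0 x1 y0 y1 - RI h x0 x1 y0 y1)%C.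
Proof.
  intros Hg Hh. unfold RI, hseg, vseg.
  rewrite !(CI_minus (fun t => g (t, _)) (fun t => h (t, _))) by (apply Icont_h; auto).
  rewrite !(CI_minus (fun t => g (_, t)) (fun t => h (_, t))) by (apply Icont_v; auto).
  ring.
Qed.

Lemma RI_bound g x0 x1 y0 y1 M : Call g -> x0 <= x1 -> y0 <= y1 ->
  (forall w : C, x0 <= fst w <= x1 -> y0 <= snd w <= y1 -> Cmod (g w) <= M) ->
  Cmod (RI g x0 x1 y0 y1) <= 2 * (x1 - x0) * M + 2 * (y1 - y0) * M.
Proof.
  intros Hg Hx Hy HM. unfold RI, hseg, vseg.
  assert (A1 : Cmod (CI (fun t => g (t, y0)) x0 x1) <= (x1 - x0) * M).
  { apply CI_bound; auto. apply Icont_h; auto. intros t Ht. apply HM; simpl; lra. }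
  assert (A2 : Cmod (CI (fun t => g (t, y1)) x0 x1) <= (x1 - x0) * M).
  { apply CI_bound; auto. apply Icont_h; auto. intros t Ht. apply HM; simpl; lra. }
  assert (A3 : Cmod (CI (fun s => g (x0, s)) y0 y1) <= (y1 - y0) * M).
  { apply CI_bound; auto. apply Icont_v; auto. intros t Ht. apply HM; simpl; lra. }
  assert (A4 : Cmod (CI (fun s => g (x1, s)) y0 y1) <= (y1 - y0) * M).
  { apply CI_bound; auto. apply Icont_v; auto. intros t Ht. apply HM; simpl; lra. }
  set (a := CI (fun t => g (t, y0)) x0 x1) in *.
  set (b := CI (fun t => g (t, y1)) x0 x1) in *.
  set (c := CI (fun s => g (x0, s)) y0 y1) in *.
  set (e := CI (fun s => g (x1, s)) y0 y1) in *.
  eapply Rle_trans. apply Cmod_tri3.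
  eapply Rle_trans. apply Rplus_le_compat_r. apply Cmod_tri3.
  eapply Rle_trans. apply Rplus_le_compat_r. apply Rplus_le_compat_r. apply Cmod_triangle.
  rewrite !Cmod_mult, !Cmod_Ci. lra.
Qed.

Lemma CI_id a b : CI (fun t => RtoC t) a b = RtoC ((b * b - a * a) / 2).
Proof.
  rewrite (FTC (fun t => RtoC (t * t / 2)) (fun t => RtoC t)).
  - rewrite <- RtoC_minus. f_equal. field.
  - intros t _. apply RD_pair; simpl.
    + apply is_derive_Reals. auto_derive; auto. field.
    + apply derivable_pt_lim_const.
  - intros t _. apply RD_Rcont with (l := RtoC 1). apply RD_RtoC.
Qed.

Lemma Icont_RtoC a b : Icont (fun t => RtoC t) a b.
Proof. intros t _. apply RD_Rcont with (l := RtoC 1). apply RD_RtoC. Qed.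

Lemma Icont_const c a b : Icont (fun _ => c) a b.
Proof. intros t _. apply Rcont_const. Qed.

Lemma CI_affine c0 c1 a b : CI (fun t => c0 + c1 * RtoC t)%C a b =
  (c0 * RtoC (b - a) + c1 * RtoC ((b * b - a * a) / 2))%C.
Proof.
  rewrite CI_plus. rewrite CI_const, CI_scal, CI_id. ring.
  apply Icont_RtoC. apply Icont_const.
  intros t _. apply Rcont_mult. apply Rcont_const. apply RD_Rcont with (l := RtoC 1); apply RD_RtoC.
Qed.

Lemma hseg_aff al be y a b : hseg (fun w => al + be * w)%C y a b =
  ((al + be * (Ci * RtoC y)) * RtoC (b - a) + be * RtoC ((b * b - a * a) / 2))%C.
Proof.
  unfold hseg. rewrite <- CI_affine. apply CI_ext. intros t _. rewrite C_decomp. ring.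
Qed.

Lemma vseg_aff al be x a b : vseg (fun w => al + be * w)%C x a b =
  ((al + be * RtoC x) * RtoC (b - a) + (be * Ci) * RtoC ((b * b - a * a) / 2))%C.
Proof.
  unfold vseg. rewrite <- CI_affine. apply CI_ext. intros t _. rewrite C_decomp. ring.
Qed.

Lemma RI_affine al be x0 x1 y0 y1 : RI (fun w => al + be * w)%C x0 x1 y0 y1 = RtoC 0.
Proof.
  unfold RI. rewrite !hseg_aff, !vseg_aff. rewrite !RtoC_minus. ring.
Qed.

Definition Qr g d e x y n := RI g x (x + d * (/2)^n) y (y + e * (/2)^n).

Lemma half_pow_S n : (/2)^(S n) = /2 * (/2)^n.
Proof. simpl. auto. Qed.

Lemma half_pow_pos n : 0 < (/2)^n.
Proof. apply pow_lt. lra. Qed.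

Lemma Qr_quad g d e x y n : Call g ->
  Qr g d e x y n = (Qr g d e x y (S n) + Qr g d e (x + d * (/2)^(S n)) y (S n)
     + Qr g d e x (y + e * (/2)^(S n)) (S n) + Qr g d e (x + d * (/2)^(S n)) (y + e * (/2)^(S n)) (S n))%C.
Proof.
  intros Hg. unfold Qr. set (h := d * (/2)^(S n)). set (k := e * (/2)^(S n)).
  replace (x + d * (/2)^n) with (x + h + h) by (unfold h; rewrite half_pow_S; field).
  replace (y + e * (/2)^n) with (y + k + k) by (unfold k; rewrite half_pow_S; field).
  rewrite (RI_split_x g x (x + h)) by auto.
  rewrite (RI_split_y g x (x + h) y (y + k)) by auto.
  rewrite (RI_split_y g (x + h) (x + h + h) y (y + k)) by auto.
  ring.
Qed.

Definition pick g d e x y n : R * R :=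
  let h := d * (/2)^(S n) in let k := e * (/2)^(S n) in
  let q := Cmod (Qr g d e x y n) / 4 in
  if Rle_dec q (Cmod (Qr g d e x y (S n))) then (x, y)
  else if Rle_dec q (Cmod (Qr g d e (x + h) y (S n))) then (x + h, y)
  else if Rle_dec q (Cmod (Qr g d e x (y + k) (S n))) then (x, y + k)
  else (x + h, y + k).

Lemma pick_prop g d e x y n : Call g -> 0 <= d -> 0 <= e ->
  let p := pick g d e x y n in
  Cmod (Qr g d e x y n) / 4 <= Cmod (Qr g d e (fst p) (snd p) (S n)) /\
  x <= fst p <= x + d * (/2)^(S n) /\ y <= snd p <= y + e * (/2)^(S n).
Proof.
  intros Hg Hd He p.
  assert (Hh : 0 <= d * (/2)^(S n)) by (apply Rmult_le_pos; auto; left; apply half_pow_pos).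
  assert (Hk : 0 <= e * (/2)^(S n)) by (apply Rmult_le_pos; auto; left; apply half_pow_pos).
  unfold p, pick; clear p.
  destruct (Rle_dec _ _) as [H1|H1]; cbn [fst snd]; [repeat split; auto; lra|].
  destruct (Rle_dec _ _) as [H2|H2]; cbn [fst snd]; [repeat split; auto; lra|].
  destruct (Rle_dec _ _) as [H3|H3]; cbn [fst snd]; [repeat split; auto; lra|].
  repeat split; try lra.
  generalize (Qr_quad g d e x y n Hg). intros E.
  set (A := Qr g d e x y n) in *.
  set (B1 := Qr g d e x y (S n)) in *.
  set (B2 := Qr g d e (x + d * (/2)^(S n)) y (S n)) in *.
  set (B3 := Qr g d e x (y + e * (/2)^(S n)) (S n)) in *.
  set (B4 := Qr g d e (x + d * (/2)^(S n)) (y + e * (/2)^(S n)) (S n)) in *.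
  assert (Cmod A <= Cmod B1 + Cmod B2 + Cmod B3 + Cmod B4).
  { rewrite E. eapply Rle_trans. apply Cmod_triangle.
    eapply Rle_trans. apply Rplus_le_compat_r. apply Cmod_triangle.
    eapply Rle_trans. apply Rplus_le_compat_r. apply Rplus_le_compat_r. apply Cmod_triangle. lra. }
  lra.
Qed.

Fixpoint corner g d e x0 y0 n : R * R :=
  match n with
  | O => (x0, y0)
  | S m => let c := corner g d e x0 y0 m in pick g d e (fst c) (snd c) m
  end.

Lemma corner_Q g d e x0 y0 n : Call g -> 0 <= d -> 0 <= e ->
  Cmod (Qr g d e x0 y0 0) * (/4)^n <= Cmod (Qr g d e (fst (corner g d e x0 y0 n)) (snd (corner g d e x0 y0 n)) n).
Proof.
  intros Hg Hd He. induction n.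
  - simpl. lra.
  - simpl corner. destruct (pick_prop g d e (fst (corner g d e x0 y0 n)) (snd (corner g d e x0 y0 n)) n Hg Hd He) as [H1 _].
    simpl pow. lra.
Qed.

Lemma corner_mono g d e x0 y0 n j : Call g -> 0 <= d -> 0 <= e ->
  fst (corner g d e x0 y0 n) <= fst (corner g d e x0 y0 (n + j)) /\
  fst (corner g d e x0 y0 (n + j)) + d * (/2)^(n + j) <= fst (corner g d e x0 y0 n) + d * (/2)^n /\
  snd (corner g d e x0 y0 n) <= snd (corner g d e x0 y0 (n + j)) /\
  snd (corner g d e x0 y0 (n + j)) + e * (/2)^(n + j) <= snd (corner g d e x0 y0 n) + e * (/2)^n.
Proof.
  intros Hg Hd He. induction j.
  - rewrite Nat.add_0_r. lra.
  - rewrite Nat.add_succ_r. simpl corner.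
    destruct (pick_prop g d e (fst (corner g d e x0 y0 (n + j))) (snd (corner g d e x0 y0 (n + j))) (n + j) Hg Hd He)
      as [_ [H1 H2]].
    rewrite half_pow_S in *. lra.
Qed.

Lemma lub_corner_x g d e x0 y0 : Call g -> 0 <= d -> 0 <= e ->
  { X : R | forall n, fst (corner g d e x0 y0 n) <= X <= fst (corner g d e x0 y0 n) + d * (/2)^n }.
Proof.
  intros Hg Hd He.
  set (E := fun x => exists n, x = fst (corner g d e x0 y0 n)).
  assert (Hb : bound E).
  { exists (x0 + d). intros x [n Hn]. subst.
    destruct (corner_mono g d e x0 y0 0 n Hg Hd He) as [_ [H _]]. simpl in H.
    generalize (half_pow_pos n). intros. nra. }
  destruct (completeness E Hb ltac:(exists x0; exists 0%nat; auto)) as [X [HX1 HX2]].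
  exists X. intros n. split.
  - apply HX1. exists n; auto.
  - apply HX2. intros x [m Hm]. subst.
    destruct (Compare_dec.le_lt_dec n m) as [Hnm|Hnm].
    + replace m with (n + (m - n))%nat by lia.
      destruct (corner_mono g d e x0 y0 n (m - n) Hg Hd He) as [_ [H _]].
      generalize (half_pow_pos (n + (m - n))). intros. nra.
    + replace n with (m + (n - m))%nat by lia.
      destruct (corner_mono g d e x0 y0 m (n - m) Hg Hd He) as [H _].
      generalize (half_pow_pos (m + (n - m))). intros. nra.
Qed.

Lemma lub_corner_y g d e x0 y0 : Call g -> 0 <= d -> 0 <= e ->
  { Y : R | forall n, snd (corner g d e x0 y0 n) <= Y <= snd (corner g d e x0 y0 n) + e * (/2)^n }.
Proof.
  intros Hg Hd He.
  set (E := fun x => exists n, x = snd (corner g d e x0 y0 n)).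
  assert (Hb : bound E).
  { exists (y0 + e). intros x [n Hn]. subst.
    destruct (corner_mono g d e x0 y0 0 n Hg Hd He) as [_ [_ [_ H]]]. simpl in H.
    generalize (half_pow_pos n). intros. nra. }
  destruct (completeness E Hb ltac:(exists y0; exists 0%nat; auto)) as [X [HX1 HX2]].
  exists X. intros n. split.
  - apply HX1. exists n; auto.
  - apply HX2. intros x [m Hm]. subst.
    destruct (Compare_dec.le_lt_dec n m) as [Hnm|Hnm].
    + replace m with (n + (m - n))%nat by lia.
      destruct (corner_mono g d e x0 y0 n (m - n) Hg Hd He) as [_ [_ [_ H]]].
      generalize (half_pow_pos (n + (m - n))). intros. nra.
    + replace n with (m + (n - m))%nat by lia.
      destruct (corner_mono g d e x0 y0 m (n - m) Hg Hd He) as [_ [_ [H _]]].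
      generalize (half_pow_pos (m + (n - m))). intros. nra.
Qed.

Lemma le_eps_zero a K : 0 <= K -> (forall eps, 0 < eps -> a <= eps * K) -> a <= 0.
Proof.
  intros HK H. destruct (Rle_dec a 0) as [|Ha]; auto. exfalso.
  assert (Ha' : 0 < a) by lra.
  specialize (H (a / (2 * (K + 1))) ltac:(apply Rdiv_lt_0_compat; lra)).
  assert (a / (2 * (K + 1)) * K < a).
  { apply Rle_lt_trans with (a / (2 * (K + 1)) * (K + 1)). apply Rmult_le_compat_l. left; apply Rdiv_lt_0_compat; lra. lra.
    replace (a / (2 * (K + 1)) * (K + 1)) with (a / 2) by (field; lra). lra. }
  lra.
Qed.

Lemma Call_affine al be : Call (fun w => al + be * w)%C.
Proof.
  intros z. eapply CD_Ccont. apply CD_plus. apply CD_const. apply CD_scal. apply CD_id.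
Qed.

Lemma goursat g x0 x1 y0 y1 : Call g -> x0 <= x1 -> y0 <= y1 ->
  (forall w : C, x0 <= fst w <= x1 -> y0 <= snd w <= y1 -> exists l, CD g w l) ->
  RI g x0 x1 y0 y1 = RtoC 0.
Proof.
  intros Hg Hx Hy Hhol.
  set (d := x1 - x0). set (e := y1 - y0).
  assert (Hd : 0 <= d) by (unfold d; lra). assert (He : 0 <= e) by (unfold e; lra).
  assert (Q0 : RI g x0 x1 y0 y1 = Qr g d e x0 y0 0).
  { unfold Qr. simpl. f_equal; unfold d, e; ring. }
  rewrite Q0.
  destruct (lub_corner_x g d e x0 y0 Hg Hd He) as [X HX].
  destruct (lub_corner_y g d e x0 y0 Hg Hd He) as [Y HY].
  assert (HXY := conj (HX 0%nat) (HY 0%nat)). simpl in HXY.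
  destruct (Hhol (X, Y)) as [L HL]. { simpl. unfold d in HXY. lra. } { simpl. unfold e in HXY. lra. }
  apply Cmod_eq_0. apply Rle_antisym; [|apply Cmod_ge_0].
  apply (le_eps_zero _ (2 * (d + e) * (d + e))). nra.
  intros eps Heps.
  destruct (HL eps Heps) as [del [Hdel HL']].
  destruct (pow_lt_1_zero (/2) ltac:(rewrite Rabs_pos_eq; lra) (del / (d + e + 1)) ltac:(apply Rdiv_lt_0_compat; lra))
    as [N HN].
  specialize (HN N (le_n N)). rewrite Rabs_pos_eq in HN by (left; apply half_pow_pos).
  set (p := (/2)^N) in *. assert (Hp : 0 < p) by apply half_pow_pos.
  assert (Hsmall : (d + e) * p < del).
  { apply Rle_lt_trans with ((d + e + 1) * p). nra.
    apply (Rmult_lt_compat_l (d + e + 1)) in HN; [|lra].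
    replace ((d + e + 1) * (del / (d + e + 1))) with del in HN by (field; lra). lra. }
  generalize (corner_Q g d e x0 y0 N Hg Hd He). intros HQ.
  set (xn := fst (corner g d e x0 y0 N)) in *. set (yn := snd (corner g d e x0 y0 N)) in *.
  specialize (HX N). specialize (HY N). fold xn in HX. fold yn in HY. fold p in HX, HY.
  set (aff := (fun w => (g (X, Y) - L * (X, Y)) + L * w)%C).
  assert (HQN : Qr g d e xn yn N = RI (fun w => g w - aff w)%C xn (xn + d * p) yn (yn + e * p)).
  { rewrite RI_minus; auto. unfold aff. rewrite RI_affine. unfold Qr. fold p. ring. apply Call_affine. }
  assert (Hb : Cmod (Qr g d e xn yn N) <= 2 * (d * p) * (eps * ((d + e) * p)) + 2 * (e * p) * (eps * ((d + e) * p))).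
  { rewrite HQN. replace (xn + d * p - xn) with (d * p) by ring. replace (yn + e * p - yn) with (e * p) by ring.
    replace (2 * (d * p) * (eps * ((d + e) * p)) + 2 * (e * p) * (eps * ((d + e) * p))) with
      (2 * (xn + d * p - xn) * (eps * ((d + e) * p)) + 2 * (yn + e * p - yn) * (eps * ((d + e) * p))) by ring.
    apply RI_bound.
    - intros z. unfold Ccont. intros. 
      assert (Hc : Ccont (fun w => g w - aff w)%C z).
      { intros eps' He'. destruct (Hg z (eps'/2) ltac:(lra)) as [d1 [Hd1 H1]].
        destruct (Call_affine (g (X, Y) - L * (X, Y))%C L z (eps'/2) ltac:(lra)) as [d2 [Hd2 H2]].
        exists (Rmin d1 d2); split. apply Rmin_pos; auto. intros w Hw.
        specialize (H1 w ltac:(eapply Rlt_le_trans; [apply Hw|apply Rmin_l])).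
        specialize (H2 w ltac:(eapply Rlt_le_trans; [apply Hw|apply Rmin_r])).
        replace (g w - aff w - (g z - aff z))%C with ((g w - g z) - (aff w - aff z))%C by ring.
        eapply Rle_lt_trans. apply Cmod_tri3. unfold aff. lra. }
      apply Hc; auto.
    - nra.
    - nra.
    - intros w Hw1 Hw2.
      assert (Hwz : Cmod (w - (X, Y)) <= (d + e) * p).
      { eapply Rle_trans. apply Cmod_le_sum. destruct w as [w1 w2]. simpl in *.
        replace (w1 + - X) with (w1 - X) by ring. replace (w2 + - Y) with (w2 - Y) by ring.
        assert (Rabs (w1 - X) <= d * p) by (apply Rabs_le; lra).
        assert (Rabs (w2 - Y) <= e * p) by (apply Rabs_le; lra). lra. }
      specialize (HL' w ltac:(lra)).
      replace (g w - aff w)%C with (g w - g (X, Y) - L * (w - (X, Y)))%C by (unfold aff; ring).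
      eapply Rle_trans. apply HL'. apply Rmult_le_compat_l; lra. }
  assert (E4 : (/4)^N = p * p).
  { unfold p. rewrite <- Rpow_mult_distr. f_equal. field. }
  rewrite E4 in HQ.
  assert (Cmod (Qr g d e x0 y0 0) * (p * p) <= (eps * (2 * (d + e) * (d + e))) * (p * p)) by nra.
  apply Rmult_le_reg_r in H; auto. nra.
Qed.

Lemma RI_degen_x g x y0 y1 : RI g x x y0 y1 = RtoC 0.
Proof. unfold RI, hseg. rewrite !CI_point. ring. Qed.

Lemma RI_degen_y g x0 x1 y : RI g x0 x1 y y = RtoC 0.
Proof. unfold RI, vseg. rewrite !CI_point. ring. Qed.

Lemma RI_swap_x g x0 x1 y0 y1 : Call g -> RI g x1 x0 y0 y1 = (- RI g x0 x1 y0 y1)%C.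
Proof.
  intros Hg. unfold RI, hseg.
  rewrite (CI_swap (fun t => g (t, y0)) x0 x1), (CI_swap (fun t => g (t, y1)) x0 x1) by (apply Icont_h; auto).
  ring.
Qed.

Lemma RI_swap_y g x0 x1 y0 y1 : Call g -> RI g x0 x1 y1 y0 = (- RI g x0 x1 y0 y1)%C.
Proof.
  intros Hg. unfold RI, vseg.
  rewrite (CI_swap (fun s => g (x0, s)) y0 y1), (CI_swap (fun s => g (x1, s)) y0 y1) by (apply Icont_v; auto).
  ring.
Qed.

Lemma goursat_exc g z x0 x1 y0 y1 : Call g -> (forall w, w <> z -> exists l, CD g w l) ->
  x0 <= x1 -> y0 <= y1 -> RI g x0 x1 y0 y1 = RtoC 0.
Proof.
  intros Hg Hhol Hx Hy.
  destruct z as [a b].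
  destruct (Rle_dec x0 a) as [Ha1|Ha1].
  2:{ apply goursat; auto; intros w Hw1 Hw2; apply Hhol; intro E; subst w; simpl in *; lra. }
  destruct (Rle_dec a x1) as [Ha2|Ha2].
  2:{ apply goursat; auto; intros w Hw1 Hw2; apply Hhol; intro E; subst w; simpl in *; lra. }
  destruct (Rle_dec y0 b) as [Hb1|Hb1].
  2:{ apply goursat; auto; intros w Hw1 Hw2; apply Hhol; intro E; subst w; simpl in *; lra. }
  destruct (Rle_dec b y1) as [Hb2|Hb2].
  2:{ apply goursat; auto; intros w Hw1 Hw2; apply Hhol; intro E; subst w; simpl in *; lra. }
  destruct (Hg (a, b) 1 Rlt_0_1) as [rho [Hrho Hc]].
  set (M := Cmod (g (a, b)) + 1).
  assert (HM : 0 <= M) by (unfold M; generalize (Cmod_ge_0 (g (a, b))); lra).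
  apply Cmod_eq_0. apply Rle_antisym; [|apply Cmod_ge_0].
  apply (le_eps_zero _ (8 * M)). lra.
  intros eps Heps.
  set (s := Rmin eps (rho / 4)).
  assert (Hs : 0 < s) by (apply Rmin_pos; lra).
  assert (Hs1 : s <= eps) by apply Rmin_l. assert (Hs2 : s <= rho / 4) by apply Rmin_r.
  set (p := Rmax x0 (a - s)). set (q := Rmin x1 (a + s)).
  set (p' := Rmax y0 (b - s)). set (q' := Rmin y1 (b + s)).
  assert (Hp : x0 <= p <= a /\ a - s <= p) by (unfold p; split; [split|]; [apply Rmax_l| apply Rmax_lub; lra| apply Rmax_r]).
  assert (Hq : a <= q <= x1 /\ q <= a + s) by (unfold q; split; [split|]; [apply Rmin_glb; lra| apply Rmin_l| apply Rmin_r]).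
  assert (Hp' : y0 <= p' <= b /\ b - s <= p') by (unfold p'; split; [split|]; [apply Rmax_l| apply Rmax_lub; lra| apply Rmax_r]).
  assert (Hq' : b <= q' <= y1 /\ q' <= b + s) by (unfold q'; split; [split|]; [apply Rmin_glb; lra| apply Rmin_l| apply Rmin_r]).
  (* the pieces not containing z vanish *)
  assert (Z1 : forall c0 c1, c0 <= c1 -> RI g x0 p c0 c1 = RtoC 0).
  { intros c0 c1 Hc01. destruct (Rle_dec (a - s) x0) as [E|E].
    - assert (p = x0) by (unfold p; apply Rmax_left; lra). rewrite H. apply RI_degen_x.
    - assert (p = a - s) by (unfold p; apply Rmax_right; lra).
      apply goursat; auto. lra. intros w Hw1 Hw2. apply Hhol. intro Ew; subst w; simpl in *; lra. }
  assert (Z2 : forall c0 c1, c0 <= c1 -> RI g q x1 c0 c1 = RtoC 0).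
  { intros c0 c1 Hc01. destruct (Rle_dec x1 (a + s)) as [E|E].
    - assert (q = x1) by (unfold q; apply Rmin_left; lra). rewrite H. apply RI_degen_x.
    - assert (q = a + s) by (unfold q; apply Rmin_right; lra).
      apply goursat; auto. lra. intros w Hw1 Hw2. apply Hhol. intro Ew; subst w; simpl in *; lra. }
  assert (Z3 : RI g p q y0 p' = RtoC 0).
  { destruct (Rle_dec (b - s) y0) as [E|E].
    - assert (p' = y0) by (unfold p'; apply Rmax_left; lra). rewrite H. apply RI_degen_y.
    - assert (p' = b - s) by (unfold p'; apply Rmax_right; lra).
      apply goursat; auto. lra. lra. intros w Hw1 Hw2. apply Hhol. intro Ew; subst w; simpl in *; lra. }
  assert (Z4 : RI g p q q' y1 = RtoC 0).
  { destruct (Rle_dec y1 (b + s)) as [E|E].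
    - assert (q' = y1) by (unfold q'; apply Rmin_left; lra). rewrite H. apply RI_degen_y.
    - assert (q' = b + s) by (unfold q'; apply Rmin_right; lra).
      apply goursat; auto. lra. lra. intros w Hw1 Hw2. apply Hhol. intro Ew; subst w; simpl in *; lra. }
  rewrite (RI_split_x g x0 p x1) by auto. rewrite (RI_split_x g p q x1) by auto.
  rewrite Z1, Z2 by auto.
  rewrite (RI_split_y g p q y0 p' y1) by auto. rewrite (RI_split_y g p q p' q' y1) by auto.
  rewrite Z3, Z4.
  match goal with |- Cmod ?X <= _ => replace X with (RI g p q p' q') by ring end.
  eapply Rle_trans. apply RI_bound with (M := M); auto; try lra.
  - intros w Hw1 Hw2. 
    assert (Cmod (w - (a, b)) < rho).
    { eapply Rle_lt_trans. apply Cmod_le_sum. destruct w as [w1 w2]; simpl in *.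
      assert (Rabs (w1 + - a) <= s) by (apply Rabs_le; lra).
      assert (Rabs (w2 + - b) <= s) by (apply Rabs_le; lra). lra. }
    specialize (Hc w H). unfold M.
    replace (g w) with ((g w - g (a, b)) + g (a, b))%C by ring.
    eapply Rle_trans. apply Cmod_triangle. lra.
  - assert (q - p <= 2 * s) by lra. assert (q' - p' <= 2 * s) by lra.
    assert (2 * (q - p) * M <= 2 * (2 * s) * M) by (apply Rmult_le_compat_r; lra).
    assert (2 * (q' - p') * M <= 2 * (2 * s) * M) by (apply Rmult_le_compat_r; lra).
    assert (s * M <= eps * M) by (apply Rmult_le_compat_r; lra).
    nra.
Qed.

Lemma goursat_all g z x0 x1 y0 y1 : Call g -> (forall w, w <> z -> exists l, CD g w l) ->
  RI g x0 x1 y0 y1 = RtoC 0.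
Proof.
  intros Hg Hhol.
  destruct (Rle_dec x0 x1); destruct (Rle_dec y0 y1).
  - eapply goursat_exc; eauto.
  - rewrite (RI_swap_y g x0 x1 y1 y0) by auto.
    rewrite (goursat_exc g z); auto; try lra. ring.
  - rewrite (RI_swap_x g x1 x0 y0 y1) by auto.
    rewrite (goursat_exc g z); auto; try lra. ring.
  - rewrite (RI_swap_x g x1 x0 y0 y1) by auto. rewrite (RI_swap_y g x1 x0 y1 y0) by auto.
    rewrite (goursat_exc g z); auto; try lra. ring.
Qed.

Definition prim (g : C -> C) (w : C) : C := (hseg g 0 0 (fst w) + Ci * vseg g (fst w) 0 (snd w))%C.

Lemma prim_CD g : Call g -> (forall x0 x1 y0 y1, RI g x0 x1 y0 y1 = RtoC 0) -> forall w, CD (prim g) w (g w).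
Proof.
  intros Hg HR w. destruct w as [x y]. intros eps He.
  destruct (Hg (x, y) (eps / 2) ltac:(lra)) as [rho [Hrho Hc]].
  exists (rho / 2). split. lra.
  intros w' Hw'. destruct w' as [x' y'].
  assert (Hxx : Rabs (x' - x) <= Cmod ((x', y') - (x, y))).
  { replace (x' - x) with (fst ((x', y') - (x, y))%C) by (simpl; ring). apply fst_le_Cmod. }
  assert (Hyy : Rabs (y' - y) <= Cmod ((x', y') - (x, y))).
  { replace (y' - y) with (snd ((x', y') - (x, y))%C) by (simpl; ring). apply snd_le_Cmod. }
  assert (E1 : (prim g (x', y') - prim g (x, y) = hseg g y x x' + Ci * vseg g x' y y')%C).
  { unfold prim; simpl fst; simpl snd.
    assert (C1 : hseg g 0 0 x' = (hseg g 0 0 x + hseg g 0 x x')%C).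
    { unfold hseg. rewrite CI_Chasles; auto; apply Icont_h; auto. }
    assert (C2 : vseg g x' 0 y' = (vseg g x' 0 y + vseg g x' y y')%C).
    { unfold vseg. rewrite CI_Chasles; auto; apply Icont_v; auto. }
    assert (Hh : hseg g y x x' = (hseg g 0 x x' + Ci * vseg g x' 0 y - Ci * vseg g x 0 y - RI g x x' 0 y)%C)
      by (unfold RI; ring).
    rewrite C1, C2, Hh, HR. ring. }
  assert (E2 : ((x', y') - (x, y) = RtoC (x' - x) + Ci * RtoC (y' - y))%C).
  { rewrite !C_decomp. rewrite !RtoC_minus. ring. }
  rewrite E1, E2.
  replace (hseg g y x x' + Ci * vseg g x' y y' - g (x, y) * (RtoC (x' - x) + Ci * RtoC (y' - y)))%C
    with ((hseg g y x x' - CI (fun _ => g (x, y)) x x') + Ci * (vseg g x' y y' - CI (fun _ => g (x, y)) y y'))%C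
    by (rewrite !CI_const; ring).
  rewrite <- E2.
  unfold hseg, vseg.
  rewrite <- !CI_minus by (try apply Icont_h; try apply Icont_v; try apply Icont_const; auto).
  eapply Rle_trans. apply Cmod_triangle. rewrite Cmod_mult, Cmod_Ci, Rmult_1_l.
  assert (B1 : Cmod (CI (fun t => g (t, y) - g (x, y))%C x x') <= Rabs (x' - x) * (eps / 2)).
  { apply CI_bound_gen.
    - intros t _. apply Rcont_minus. apply (Rcont_comp g (fun s => (s, y) : C)). apply Hg. apply Rcont_hpath. apply Rcont_const.
    - intros t Ht. left. apply Hc.
      replace ((t, y) - (x, y))%C with (RtoC (t - x)) by (unfold RtoC, Cminus, Cplus, Copp; simpl; f_equal; ring).
      rewrite Cmod_R.
      assert (Rabs (t - x) <= Rabs (x' - x)).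
      { destruct (Rle_dec x x'). rewrite Rmin_left, Rmax_right in Ht by lra. rewrite !Rabs_pos_eq; lra.
        rewrite Rmin_right, Rmax_left in Ht by lra. rewrite !Rabs_left1; lra. }
      lra. }
  assert (B2 : Cmod (CI (fun s => g (x', s) - g (x, y))%C y y') <= Rabs (y' - y) * (eps / 2)).
  { apply CI_bound_gen.
    - intros t _. apply Rcont_minus. apply (Rcont_comp g (fun s => (x', s) : C)). apply Hg. apply Rcont_vpath. apply Rcont_const.
    - intros t Ht. left. apply Hc.
      eapply Rle_lt_trans. apply Cmod_le_sum. simpl.
      assert (Rabs (t + - y) <= Rabs (y' - y)).
      { destruct (Rle_dec y y'). rewrite Rmin_left, Rmax_right in Ht by lra. rewrite !Rabs_pos_eq; lra.
        rewrite Rmin_right, Rmax_left in Ht by lra. rewrite !Rabs_left1; lra. }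
      replace (x' + - x) with (x' - x) by ring. lra. }
  nra.
Qed.

Lemma cauchy_circle g z r : 0 < r -> Call g -> (forall w, w <> z -> exists l, CD g w l) ->
  CI (fun t => g (circ r t) * circ r t)%C 0 (2 * PI) = RtoC 0.
Proof.
  intros Hr Hg Hhol.
  assert (HR : forall x0 x1 y0 y1, RI g x0 x1 y0 y1 = RtoC 0) by (intros; eapply goursat_all; eauto).
  assert (Hc : forall t, Rcont (fun s => g (circ r s)) t) by (intros; apply Rcont_comp; [apply Hg|apply circ_cont]).
  generalize (CI_circ_deriv_zero r (prim g) g (fun t => prim_CD g Hg HR _) Hc). intros H.
  rewrite (CI_ext _ (fun t => Ci * (g (circ r t) * circ r t))%C) in H by (intros; ring).
  rewrite CI_scal in H.
  - set (X := CI (fun t => g (circ r t) * circ r t)%C 0 (2 * PI)) in *.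
    replace X with (/ Ci * (Ci * X))%C by (field; apply Ci_nz). rewrite H. ring.
  - intros t _. apply Rcont_mult; auto. apply circ_cont.
Qed.

Fixpoint csum (F : nat -> C) (N : nat) : C :=
  match N with O => RtoC 0 | S n => (csum F n + F n)%C end.

Definition Rfull (f : R -> C) := forall t, Rcont f t.

Lemma Rfull_Icont f a b : Rfull f -> Icont f a b.
Proof. intros H t _. apply H. Qed.

Lemma Rfull_csum (F : nat -> R -> C) N : (forall k, Rfull (F k)) -> Rfull (fun t => csum (fun k => F k t) N).
Proof.
  intros H. induction N; intros t; simpl.
  - apply Rcont_const.
  - apply Rcont_plus; auto. apply H.
Qed.

Lemma CI_csum (F : nat -> R -> C) N a b : (forall k, Rfull (F k)) ->
  CI (fun t => csum (fun k => F k t) N) a b = csum (fun k => CI (F k) a b) N.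
Proof.
  intros H. induction N; simpl.
  - rewrite CI_const. ring.
  - rewrite CI_plus. rewrite IHN. auto. apply Rfull_Icont. apply Rfull_csum; auto. apply Rfull_Icont, H.
Qed.

Lemma circ_cont_fun (G : C -> C) r : (forall t, exists a, CD G (circ r t) a) -> Rfull (fun t => G (circ r t)).
Proof. intros H t. apply circ_comp_cont. auto. Qed.

Lemma Call_Rfull (G : C -> C) r : Call G -> Rfull (fun t => G (circ r t)).
Proof. intros H t. apply Rcont_comp. apply H. apply circ_cont. Qed.

Lemma hol_Call f : hol f -> Call f.
Proof. intros H z. destruct (H z) as [l Hl]. eapply CD_Ccont; eauto. Qed.

Lemma csum_ext F G N : (forall k, F k = G k) -> csum F N = csum G N.
Proof. intros H. induction N; simpl; auto. rewrite IHN, H. auto. Qed.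

Lemma csum_scal c F N : (c * csum F N = csum (fun k => c * F k) N)%C.
Proof. induction N; simpl. ring. rewrite <- IHN. ring. Qed.

Lemma geom_id (u z : C) N : u <> RtoC 0 -> (u - z)%C <> RtoC 0 ->
  (u / (u - z) = csum (fun k => z ^ k * (/ u) ^ k) N + (z * / u) ^ N * (u / (u - z)))%C.
Proof.
  intros Hu Huz. assert (HK : (u / (u - z) = 1 + z * / u * (u / (u - z)))%C) by (field; auto).
  set (K := (u / (u - z))%C) in *. induction N.
  - simpl. ring.
  - transitivity (csum (fun k : nat => (z ^ k * (/ u) ^ k)%C) N + (z * / u) ^ N * K)%C; auto.
    simpl. rewrite !Cpow_mult_l. rewrite HK at 1. ring.
Qed.

Lemma circ_minus_bound r t z : 0 <= r -> r - Cmod z <= Cmod (circ r t - z).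
Proof. intros Hr. rewrite <- (Cmod_circ r t Hr) at 1. apply Cmod_rev_tri. Qed.

Lemma circ_minus_neq r t z : Cmod z < r -> (circ r t - z)%C <> RtoC 0.
Proof.
  intros Hz E. assert (0 <= r) by (generalize (Cmod_ge_0 z); lra).
  generalize (circ_minus_bound r t z H). rewrite E, Cmod_0. lra.
Qed.

Lemma tail_lemma a b C0 q : 0 <= q < 1 -> (forall N, a <= b + C0 * q ^ N) -> a <= b.
Proof.
  intros Hq H. destruct (Rle_dec a b) as [|Hab]; auto. exfalso.
  destruct (Rle_dec C0 0) as [HC|HC].
  { specialize (H 0%nat). simpl in H. lra. }
  destruct (pow_lt_1_zero q ltac:(rewrite Rabs_pos_eq; lra) ((a - b) / C0) ltac:(apply Rdiv_lt_0_compat; lra)) as [N HN].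
  specialize (HN N (le_n N)). specialize (H N). rewrite Rabs_pos_eq in HN by (apply pow_le; lra).
  apply (Rmult_lt_compat_l C0) in HN; [|lra]. replace (C0 * ((a - b) / C0)) with (a - b) in HN by (field; lra). lra.
Qed.

Lemma Cmod_le_0 z : Cmod z <= 0 -> z = RtoC 0.
Proof. intros H. apply Cmod_eq_0. generalize (Cmod_ge_0 z). lra. Qed.

Lemma geom_expand (phi : R -> C) r z N : 0 < r -> Cmod z < r -> Rfull phi ->
  CI (fun t => phi t * (circ r t / (circ r t - z)))%C 0 (2 * PI) =
  (csum (fun k => z ^ k * CI (fun t => phi t * (/ circ r t) ^ k) 0 (2 * PI)) N +
   CI (fun t => phi t * ((z * / circ r t) ^ N * (circ r t / (circ r t - z))))%C 0 (2 * PI))%C.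
Proof.
  intros Hr Hz Hphi.
  assert (Hk : forall k, Rfull (fun t => phi t * (/ circ r t) ^ k)%C).
  { intros k t. apply Rcont_mult; auto. apply Rcont_pow. apply Rcont_inv_circ; auto. }
  assert (Hkz : forall k, Rfull (fun t => z ^ k * (phi t * (/ circ r t) ^ k))%C).
  { intros k t. apply Rcont_mult. apply Rcont_const. apply Hk. }
  assert (HR : Rfull (fun t => phi t * ((z * / circ r t) ^ N * (circ r t / (circ r t - z))))%C).
  { intros t. apply Rcont_mult; auto. apply Rcont_mult. apply Rcont_pow. apply Rcont_mult. apply Rcont_const.
    apply Rcont_inv_circ; auto.
    apply (circ_comp_cont (fun w => w / (w - z))%C). eexists. apply CD_mult. apply CD_id.
    apply (CD_comp (fun w => / w)%C (fun w => w - z)%C). apply CD_inv0. apply circ_minus_neq; auto.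
    apply CD_minus. apply CD_id. apply CD_const. }
  rewrite (CI_ext _ (fun t => csum (fun k => z ^ k * (phi t * (/ circ r t) ^ k)) N + phi t * ((z * / circ r t) ^ N * (circ r t / (circ r t - z))))%C).
  - rewrite CI_plus. f_equal. rewrite CI_csum; auto. apply csum_ext. intros k. apply CI_scal. apply Rfull_Icont; auto.
    apply Rfull_Icont. apply Rfull_csum; auto. apply Rfull_Icont; auto.
  - intros t _. rewrite (geom_id (circ r t) z N) at 1.
    2: apply circ_neq0; auto. 2: apply circ_minus_neq; auto.
    rewrite Cmult_plus_distr_l. f_equal. rewrite csum_scal. apply csum_ext. intros k. ring.
Qed.

Lemma Rcont_Cmod_pt (phi : R -> C) t : Rcont phi t -> continuity_pt (fun s => Cmod (phi s)) t.
Proof.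
  intros H. unfold continuity_pt, continue_in, limit1_in, limit_in. simpl. unfold R_dist.
  intros eps He. destruct (H eps He) as [d [Hd H1]]. exists d; split; auto.
  intros s [_ Hs]. specialize (H1 s Hs).
  apply Rabs_lt_between. generalize (Cmod_rev_tri (phi s) (phi t)) (Cmod_rev_tri (phi t) (phi s)).
  rewrite (Cmod_minus_sym (phi t)). intros. split; lra.
Qed.

Lemma Rfull_bounded (phi : R -> C) a b : a <= b -> Rfull phi ->
  exists M, 0 <= M /\ forall t, a <= t <= b -> Cmod (phi t) <= M.
Proof.
  intros Hab H. destruct (continuity_ab_maj (fun s => Cmod (phi s)) a b Hab) as [x [Hx _]].
  intros c _. apply Rcont_Cmod_pt; auto.
  exists (Cmod (phi x)). split. apply Cmod_ge_0. auto.
Qed.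

Lemma Rfull_K r z : 0 < r -> Cmod z < r -> Rfull (fun t => circ r t / (circ r t - z))%C.
Proof.
  intros Hr Hz t.
  apply (circ_comp_cont (fun w => w / (w - z))%C). eexists. apply CD_mult. apply CD_id.
  apply (CD_comp (fun w => / w)%C (fun w => w - z)%C). apply CD_inv0. apply circ_minus_neq; auto.
  apply CD_minus. apply CD_id. apply CD_const.
Qed.

Lemma remainder_bound (phi : R -> C) r z N M : 0 < r -> Cmod z < r -> Rfull phi ->
  (forall t, 0 <= t <= 2 * PI -> Cmod (phi t) <= M) ->
  Cmod (CI (fun t => phi t * ((z * / circ r t) ^ N * (circ r t / (circ r t - z))))%C 0 (2 * PI))
   <= 2 * PI * (M * (r / (r - Cmod z))) * (Cmod z / r) ^ N.
Proof.
  intros Hr Hz Hphi HM.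
  assert (HPI : 0 < PI) by apply PI_RGT_0.
  apply Rle_trans with ((2 * PI - 0) * (M * (r / (r - Cmod z)) * (Cmod z / r) ^ N)).
  2:{ right. ring. }
  apply CI_bound. lra.
  - apply Rfull_Icont. intros t. apply Rcont_mult; auto. apply Rcont_mult. apply Rcont_pow. apply Rcont_mult.
    apply Rcont_const. apply Rcont_inv_circ; auto. apply Rfull_K; auto.
  - intros t Ht. rewrite !Cmod_mult, Cmod_pow, Cmod_mult, Cmod_inv, Cmod_div, Cmod_circ by (auto; try lra; try apply circ_neq0; try apply circ_minus_neq; auto).
    assert (0 <= M) by (generalize (HM t Ht) (Cmod_ge_0 (phi t)); lra).
    generalize (circ_minus_bound r t z ltac:(lra)). intros Hb.
    assert (Hp : 0 <= (Cmod z * / r) ^ N) by (apply pow_le; apply Rmult_le_pos; [apply Cmod_ge_0| left; apply Rinv_0_lt_compat; auto]).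
    replace (Cmod z / r) with (Cmod z * / r) by (unfold Rdiv; auto).
    assert (r / Cmod (circ r t - z) <= r / (r - Cmod z)).
    { apply Rmult_le_compat_l. lra. apply Rinv_le_contravar. lra. auto. }
    assert (0 <= r / Cmod (circ r t - z)) by (apply Rdiv_le_0_compat; lra).
    assert (Cmod (phi t) * ((Cmod z * / r) ^ N * (r / Cmod (circ r t - z))) <= M * ((Cmod z * / r) ^ N * (r / (r - Cmod z)))).
    { apply Rmult_le_compat; auto using Cmod_ge_0. apply Rmult_le_pos; auto. apply Rmult_le_compat_l; auto. }
    lra.
Qed.

Lemma csum_first F N : (forall k, (0 < k)%nat -> F k = RtoC 0) -> csum F (S N) = F 0%nat.
Proof.
  intros H. induction N. simpl. ring. simpl. simpl in IHN. rewrite IHN, (H (S N)) by lia. ring.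
Qed.

Lemma winding r z : 0 < r -> Cmod z < r ->
  CI (fun t => circ r t / (circ r t - z))%C 0 (2 * PI) = RtoC (2 * PI).
Proof.
  intros Hr Hz.
  assert (HPI : 0 < PI) by apply PI_RGT_0.
  apply Ceq_minus. apply Cmod_le_0.
  apply (tail_lemma _ 0 (2 * PI * (1 * (r / (r - Cmod z))) * (Cmod z / r)) (Cmod z / r)).
  { split. apply Rdiv_le_0_compat; [apply Cmod_ge_0|lra]. apply Rmult_lt_reg_r with r; auto. unfold Rdiv. rewrite Rmult_assoc, Rinv_l; lra. }
  intros N.
  rewrite (CI_ext _ (fun t => RtoC 1 * (circ r t / (circ r t - z)))%C) by (intros; ring).
  rewrite (geom_expand (fun _ => RtoC 1) r z (S N)); auto. 2:{ intros t. apply Rcont_const. }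
  rewrite csum_first.
  2:{ intros k Hk. rewrite (CI_ext _ (fun t => (/ circ r t) ^ k)%C) by (intros; ring). rewrite CI_circ_invpow; auto. ring. }
  simpl Cpow. rewrite (CI_ext _ (fun _ => RtoC 1)) by (intros; ring). rewrite CI_const.
  replace (1 * (RtoC (2 * PI - 0) * 1) + CI (fun t => 1 * ((z * / circ r t) * (z * / circ r t) ^ N * (circ r t / (circ r t - z)))) 0 (2 * PI) - RtoC (2 * PI))%C
    with (CI (fun t => 1 * ((z * / circ r t) ^ (S N) * (circ r t / (circ r t - z)))) 0 (2 * PI))%C.
  2:{ rewrite Rminus_0_r. simpl Cpow. ring. }
  eapply Rle_trans. apply remainder_bound; auto. intros t; apply Rcont_const.
  intros t _. rewrite Cmod_1. apply Rle_refl.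
  simpl pow. lra.
Qed.

Definition dq (f : C -> C) (z w : C) : C :=
  if Ceq_dec w z then Cderiv f z else ((f w - f z) / (w - z))%C.

Lemma dq_CD f z w : hol f -> w <> z -> exists l, CD (dq f z) w l.
Proof.
  intros Hf Hw.
  assert (Hwz : (w - z)%C <> RtoC 0) by (intro E; apply Hw; apply Ceq_minus; auto).
  destruct (Hf w) as [a Ha].
  eexists. apply (CD_ext_loc (fun v => (f v - f z) * / (v - z))%C _ _ _ (Cmod (w - z))).
  - apply Cmod_gt_0; auto.
  - intros v Hv. unfold dq. destruct (Ceq_dec v z) as [E|E]; auto.
    subst. rewrite Cmod_minus_sym in Hv. lra.
  - apply CD_mult. apply CD_minus. exact Ha. apply CD_const.
    apply (CD_comp (fun u => / u)%C (fun v => v - z)%C). apply CD_inv0; auto. apply CD_minus. apply CD_id. apply CD_const.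
Qed.

Lemma dq_Call f z : hol f -> Call (dq f z).
Proof.
  intros Hf w. destruct (Ceq_dec w z) as [E|E].
  - subst. intros eps He. generalize (hol_Cderiv f z Hf). intros HD.
    destruct (HD (eps / 2) ltac:(lra)) as [d [Hd H]]. exists d; split; auto.
    intros v Hv. unfold dq. destruct (Ceq_dec z z) as [_|C]; [|congruence].
    destruct (Ceq_dec v z) as [E|E].
    + replace (Cderiv f z - Cderiv f z)%C with (RtoC 0) by ring. rewrite Cmod_0; auto.
    + assert (Hvz : (v - z)%C <> RtoC 0) by (intro E'; apply E; apply Ceq_minus; auto).
      assert (Hp : 0 < Cmod (v - z)) by (apply Cmod_gt_0; auto).
      replace ((f v - f z) / (v - z) - Cderiv f z)%C with ((f v - f z - Cderiv f z * (v - z)) / (v - z))%C by (field; auto).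
      rewrite Cmod_div; auto. specialize (H v Hv).
      apply Rle_lt_trans with (eps / 2). 
      apply Rmult_le_reg_r with (Cmod (v - z)); auto. unfold Rdiv. rewrite Rmult_assoc, Rinv_l by lra. lra. lra.
  - destruct (dq_CD f z w Hf E) as [l Hl]. eapply CD_Ccont; eauto.
Qed.

Lemma cauchy_formula f r z : hol f -> 0 < r -> Cmod z < r ->
  CI (fun t => f (circ r t) * (circ r t / (circ r t - z)))%C 0 (2 * PI) = (RtoC (2 * PI) * f z)%C.
Proof.
  intros Hf Hr Hz.
  generalize (cauchy_circle (dq f z) z r Hr (dq_Call f z Hf) (fun w Hw => dq_CD f z w Hf Hw)). intros H.
  rewrite (CI_ext _ (fun t => f (circ r t) * (circ r t / (circ r t - z)) - f z * (circ r t / (circ r t - z)))%C) in H.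
  2:{ intros t _. unfold dq. destruct (Ceq_dec (circ r t) z) as [E|E].
      - exfalso. apply (circ_minus_neq r t z Hz). rewrite E. ring.
      - field. apply circ_minus_neq; auto. }
  rewrite CI_minus, CI_scal, winding in H; auto.
  - apply Ceq_minus. rewrite <- H. ring.
  - apply Rfull_Icont. apply Rfull_K; auto.
  - apply Rfull_Icont. intros t. apply Rcont_mult. apply Call_Rfull. apply hol_Call; auto. apply Rfull_K; auto.
  - apply Rfull_Icont. intros t. apply Rcont_mult. apply Rcont_const. apply Rfull_K; auto.
Qed.

Definition Em m (u v : C) : C := (u ^ m - v ^ m - RtoC (INR m) * v ^ (pred m) * (u - v))%C.

Lemma Em_rec m u v : Em (S m) u v = (u * Em m u v + RtoC (INR m) * v ^ (pred m) * ((u - v) * (u - v)))%C.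
Proof.
  unfold Em. rewrite S_INR, RtoC_plus. destruct m; simpl; ring.
Qed.

Lemma Em_bound m B : 0 <= B -> exists K, 0 <= K /\ forall u v, Cmod u <= B -> Cmod v <= B ->
  Cmod (Em m u v) <= K * (Cmod (u - v) * Cmod (u - v)).
Proof.
  intros HB. induction m.
  - exists 0. split. lra. intros u v _ _. unfold Em. simpl.
    replace (1 - 1 - RtoC 0 * 1 * (u - v))%C with (RtoC 0) by ring. rewrite Cmod_0. lra.
  - destruct IHm as [K [HK H]]. exists (B * K + INR m * B ^ (pred m)). split.
    { apply Rplus_le_le_0_compat. nra. apply Rmult_le_pos. apply pos_INR. apply pow_le; auto. }
    intros u v Hu Hv. rewrite Em_rec.
    eapply Rle_trans. apply Cmod_triangle. rewrite !Cmod_mult, Cmod_pow, Cmod_R, Rabs_pos_eq by apply pos_INR.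
    specialize (H u v Hu Hv).
    assert (0 <= Cmod (u - v) * Cmod (u - v)) by (apply Rmult_le_pos; apply Cmod_ge_0).
    assert (Cmod u * Cmod (Em m u v) <= B * (K * (Cmod (u - v) * Cmod (u - v)))).
    { apply Rmult_le_compat; auto using Cmod_ge_0. }
    assert (INR m * Cmod v ^ pred m <= INR m * B ^ pred m).
    { apply Rmult_le_compat_l. apply pos_INR. apply pow_incr. split; auto using Cmod_ge_0. }
    assert (INR m * Cmod v ^ pred m * (Cmod (u - v) * Cmod (u - v)) <= INR m * B ^ pred m * (Cmod (u - v) * Cmod (u - v))).
    { apply Rmult_le_compat_r; auto. }
    nra.
Qed.

Definition Phi (F : R -> C) r m (z : C) : C := CI (fun t => F t * (/ (circ r t - z)) ^ m)%C 0 (2 * PI).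

Lemma Rfull_Phi_int F r m w : 0 < r -> Rfull F -> Cmod w < r -> Rfull (fun t => F t * (/ (circ r t - w)) ^ m)%C.
Proof.
  intros Hr HF Hw t. apply Rcont_mult; auto. apply Rcont_pow.
  apply (circ_comp_cont (fun u => / (u - w))%C). eexists.
  apply (CD_comp (fun u => / u)%C (fun u => u - w)%C). apply CD_inv0. apply circ_minus_neq; auto.
  apply CD_minus. apply CD_id. apply CD_const.
Qed.

Lemma Phi_CD F r m z : 0 < r -> Rfull F -> Cmod z < r -> CD (Phi F r m) z (RtoC (INR m) * Phi F r (S m) z)%C.
Proof.
  intros Hr HF Hz eps He.
  assert (HPI : 0 < PI) by apply PI_RGT_0.
  set (d0 := r - Cmod z). assert (Hd0 : 0 < d0) by (unfold d0; lra).
  set (B := 2 / d0). assert (HB : 0 < B) by (unfold B; apply Rdiv_lt_0_compat; lra).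
  destruct (Rfull_bounded F 0 (2 * PI) ltac:(lra) HF) as [MF [HMF HMF']].
  destruct (Em_bound m B ltac:(lra)) as [K [HK HK']].
  set (Cst := 2 * PI * (MF * (K * B ^ 4 + INR m * B ^ (m + 2)))).
  assert (HCst : 0 <= Cst).
  { unfold Cst. apply Rmult_le_pos. lra. apply Rmult_le_pos; auto. apply Rplus_le_le_0_compat.
    apply Rmult_le_pos; auto. apply pow_le; lra. apply Rmult_le_pos. apply pos_INR. apply pow_le; lra. }
  exists (Rmin (d0 / 2) (eps / (Cst + 1))). split.
  { apply Rmin_pos. lra. apply Rdiv_lt_0_compat; lra. }
  intros w Hw.
  assert (Hw1 : Cmod (w - z) < d0 / 2) by (eapply Rlt_le_trans; [apply Hw|apply Rmin_l]).
  assert (Hw2 : Cmod (w - z) < eps / (Cst + 1)) by (eapply Rlt_le_trans; [apply Hw|apply Rmin_r]).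
  assert (Hwr : Cmod w <= Cmod z + Cmod (w - z)).
  { replace w with (z + (w - z))%C at 1 by ring. apply Cmod_triangle. }
  assert (Hwr' : Cmod w < r) by (unfold d0 in *; lra).
  set (h := (w - z)%C) in *.
  unfold Phi.
  rewrite <- CI_minus by (apply Rfull_Icont; apply Rfull_Phi_int; auto).
  rewrite (Cmult_comm _ h), Cmult_assoc.
  rewrite <- CI_scal by (apply Rfull_Icont; apply Rfull_Phi_int; auto).
  rewrite <- CI_minus.
  2:{ apply Rfull_Icont. intros t. apply Rcont_minus; apply Rfull_Phi_int; auto. }
  2:{ apply Rfull_Icont. intros t. apply Rcont_mult. apply Rcont_const. apply Rfull_Phi_int; auto. }
  apply Rle_trans with ((2 * PI - 0) * (MF * ((K * B ^ 4 + INR m * B ^ (m + 2)) * (Cmod h * Cmod h)))).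
  - apply CI_bound. lra.
    + apply Rfull_Icont. intros t. apply Rcont_minus. apply Rcont_minus; apply Rfull_Phi_int; auto.
      apply Rcont_mult. apply Rcont_const. apply Rfull_Phi_int; auto.
    + intros t Ht.
      set (u := circ r t).
      assert (Huz : d0 <= Cmod (u - z)) by (apply circ_minus_bound; lra).
      assert (Huw : d0 / 2 <= Cmod (u - w)).
      { generalize (circ_minus_bound r t w ltac:(lra)). fold u. unfold d0 in *. lra. }
      assert (Nuz : (u - z)%C <> RtoC 0) by (intro E; rewrite E, Cmod_0 in Huz; lra).
      assert (Nuw : (u - w)%C <> RtoC 0) by (intro E; rewrite E, Cmod_0 in Huw; lra).
      set (U := (/ (u - w))%C). set (V := (/ (u - z))%C).
      assert (HU : Cmod U <= B).
      { unfold U, B. rewrite Cmod_inv by auto. replace (2 / d0) with (/ (d0 / 2)) by (field; lra).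
        apply Rinv_le_contravar; lra. }
      assert (HV : Cmod V <= B).
      { unfold V, B. rewrite Cmod_inv by auto. apply Rle_trans with (/ d0). apply Rinv_le_contravar; lra.
        unfold Rdiv. rewrite <- (Rmult_1_l (/ d0)) at 1. apply Rmult_le_compat_r. left; apply Rinv_0_lt_compat; lra. lra. }
      assert (HUV : (U - V = h * U * V)%C) by (unfold U, V, h; field; auto).
      assert (HUVb : Cmod (U - V) <= Cmod h * (B * B)).
      { rewrite HUV, !Cmod_mult. rewrite Rmult_assoc. apply Rmult_le_compat_l. apply Cmod_ge_0.
        apply Rmult_le_compat; auto using Cmod_ge_0. }
      replace (F t * U ^ m - F t * V ^ m - h * RtoC (INR m) * (F t * V ^ S m))%C
        with (F t * (Em m U V + RtoC (INR m) * h * V ^ m * (U - V)))%C.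
      2:{ unfold Em. destruct m. simpl. ring. simpl Init.Nat.pred. rewrite HUV at 1. simpl. ring. }
      rewrite Cmod_mult. apply Rmult_le_compat; auto using Cmod_ge_0.
      eapply Rle_trans. apply Cmod_triangle.
      rewrite !Cmod_mult, Cmod_pow, Cmod_R, Rabs_pos_eq by apply pos_INR.
      specialize (HK' U V HU HV).
      assert (Cmod (U - V) * Cmod (U - V) <= (Cmod h * (B * B)) * (Cmod h * (B * B))).
      { apply Rmult_le_compat; auto using Cmod_ge_0. }
      assert (E1 : K * (Cmod (U - V) * Cmod (U - V)) <= K * B ^ 4 * (Cmod h * Cmod h)).
      { replace (K * B ^ 4 * (Cmod h * Cmod h)) with (K * ((Cmod h * (B * B)) * (Cmod h * (B * B)))) by ring.
        apply Rmult_le_compat_l; auto. }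
      assert (E2 : INR m * Cmod h * Cmod V ^ m * Cmod (U - V) <= INR m * B ^ (m + 2) * (Cmod h * Cmod h)).
      { rewrite pow_add. 
        replace (INR m * (B ^ m * B ^ 2) * (Cmod h * Cmod h)) with ((INR m * Cmod h * B ^ m) * (Cmod h * (B * B))) by ring.
        apply Rmult_le_compat; auto using Cmod_ge_0.
        apply Rmult_le_pos. apply Rmult_le_pos. apply pos_INR. apply Cmod_ge_0. apply pow_le, Cmod_ge_0.
        apply Rmult_le_compat_l. apply Rmult_le_pos. apply pos_INR. apply Cmod_ge_0. apply pow_incr. split; auto using Cmod_ge_0. }
      lra.
  - assert (0 <= Cmod h) by apply Cmod_ge_0.
    replace ((2 * PI - 0) * (MF * ((K * B ^ 4 + INR m * B ^ (m + 2)) * (Cmod h * Cmod h)))) with (Cst * Cmod h * Cmod h) by (unfold Cst; ring).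
    apply Rmult_le_compat_r; auto.
    apply Rle_trans with (Cst * (eps / (Cst + 1))). apply Rmult_le_compat_l; lra.
    apply Rle_trans with ((Cst + 1) * (eps / (Cst + 1))). apply Rmult_le_compat_r. left; apply Rdiv_lt_0_compat; lra. lra.
    right. field. lra.
Qed.

Definition Fker (f : C -> C) r (t : R) : C := (f (circ r t) * circ r t * RtoC (/ (2 * PI)))%C.

Lemma Rfull_Fker f r : hol f -> Rfull (Fker f r).
Proof.
  intros Hf t. unfold Fker. apply Rcont_mult. apply Rcont_mult. apply Call_Rfull. apply hol_Call; auto.
  apply circ_cont. apply Rcont_const.
Qed.

Lemma two_PI_neq : RtoC (2 * PI) <> RtoC 0.
Proof. intro E. apply RtoC_inj in E. generalize PI_RGT_0. lra. Qed.

Lemma Phi1 f r z : hol f -> 0 < r -> Cmod z < r -> Phi (Fker f r) r 1 z = f z.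
Proof.
  intros Hf Hr Hz. unfold Phi.
  rewrite (CI_ext _ (fun t => RtoC (/ (2 * PI)) * (f (circ r t) * (circ r t / (circ r t - z))))%C).
  2:{ intros t _. unfold Fker. simpl. unfold Cdiv. ring. }
  rewrite CI_scal, cauchy_formula; auto.
  - rewrite Cmult_assoc, <- RtoC_mult, Rinv_l. ring. generalize PI_RGT_0; lra.
  - apply Rfull_Icont. intros t. apply Rcont_mult. apply Call_Rfull. apply hol_Call; auto. apply Rfull_K; auto.
Qed.

Lemma deriv_formula f r k : hol f -> 0 < r -> forall z, Cmod z < r ->
  Cderiv_n k f z = (RtoC (INR (fact k)) * Phi (Fker f r) r (S k) z)%C.
Proof.
  intros Hf Hr. induction k; intros z Hz.
  - simpl. rewrite Phi1; auto. ring.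
  - change (Cderiv_n (S k) f z) with (Cderiv (Cderiv_n k f) z).
    apply Cderiv_eq.
    apply (CD_ext_loc (fun w => RtoC (INR (fact k)) * Phi (Fker f r) r (S k) w)%C _ _ _ (r - Cmod z)).
    + lra.
    + intros w Hw. rewrite IHk; auto.
      replace w with (z + (w - z))%C by ring. eapply Rle_lt_trans. apply Cmod_triangle. lra.
    + eapply CD_eql. apply CD_scal. apply Phi_CD; auto. apply Rfull_Fker; auto.
      rewrite fact_simpl, mult_INR, RtoC_mult. ring.
Qed.

Lemma CD_Cderiv_n f k z : hol f -> CD (Cderiv_n k f) z (Cderiv_n (S k) f z).
Proof.
  intros Hf. set (r := Cmod z + 1). assert (Hr : 0 < r) by (unfold r; generalize (Cmod_ge_0 z); lra).
  assert (HCD : CD (Cderiv_n k f) z (RtoC (INR (fact k)) * (RtoC (INR (S k)) * Phi (Fker f r) r (S (S k)) z))%C).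
  { apply (CD_ext_loc (fun w => RtoC (INR (fact k)) * Phi (Fker f r) r (S k) w)%C _ _ _ 1).
    + lra.
    + intros w Hw. rewrite deriv_formula with (r := r); auto.
      replace w with (z + (w - z))%C by ring. eapply Rle_lt_trans. apply Cmod_triangle. unfold r. lra.
    + apply CD_scal. apply Phi_CD; auto. apply Rfull_Fker; auto. unfold r; lra. }
  change (Cderiv_n (S k) f z) with (Cderiv (Cderiv_n k f) z). rewrite (Cderiv_eq _ _ _ HCD). auto.
Qed.

Lemma hol_Cderiv_n f k : hol f -> hol (Cderiv_n k f).
Proof. intros Hf z. eexists. apply CD_Cderiv_n; auto. Qed.

Definition cf (f : C -> C) r k : C := (RtoC (/ (2 * PI)) * CI (fun t => f (circ r t) * (/ circ r t) ^ k) 0 (2 * PI))%C.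

Lemma D_cf f r k : hol f -> 0 < r -> Cderiv_n k f (RtoC 0) = (RtoC (INR (fact k)) * cf f r k)%C.
Proof.
  intros Hf Hr. rewrite deriv_formula with (r := r); auto. 2: rewrite Cmod_0; auto.
  f_equal. unfold Phi, cf. rewrite <- CI_scal.
  - apply CI_ext. intros t _. unfold Fker. generalize (circ_neq0 r t Hr). intros Hu.
    replace (circ r t - RtoC 0)%C with (circ r t) by ring. simpl. field. auto.
  - apply Rfull_Icont. intros t. apply Rcont_mult. apply Call_Rfull. apply hol_Call; auto.
    apply Rcont_pow. apply Rcont_inv_circ; auto.
Qed.

Lemma taylor f r z N M : hol f -> 0 < r -> Cmod z < r ->
  (forall t, 0 <= t <= 2 * PI -> Cmod (f (circ r t)) <= M) ->
  Cmod (f z - csum (fun k => z ^ k * cf f r k)%C N) <= M * (r / (r - Cmod z)) * (Cmod z / r) ^ N.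
Proof.
  intros Hf Hr Hz HM.
  assert (HPI : 0 < PI) by apply PI_RGT_0.
  assert (Hphi : Rfull (fun t => f (circ r t))) by (apply Call_Rfull; apply hol_Call; auto).
  generalize (cauchy_formula f r z Hf Hr Hz). intros HC.
  rewrite (geom_expand (fun t => f (circ r t)) r z N Hr Hz Hphi) in HC.
  assert (E : (f z - csum (fun k => z ^ k * cf f r k) N =
     RtoC (/ (2 * PI)) * CI (fun t => f (circ r t) * ((z * / circ r t) ^ N * (circ r t / (circ r t - z)))) 0 (2 * PI))%C).
  { unfold cf. 
    rewrite (csum_ext _ (fun k => RtoC (/ (2 * PI)) * (z ^ k * CI (fun t => f (circ r t) * (/ circ r t) ^ k) 0 (2 * PI))))%C by (intros; ring).
    rewrite <- csum_scal.
    replace (f z) with (RtoC (/ (2 * PI)) * (RtoC (2 * PI) * f z))%C.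
    2:{ rewrite Cmult_assoc, <- RtoC_mult, Rinv_l by lra. ring. }
    rewrite <- HC. ring. }
  rewrite E, Cmod_mult, Cmod_R, Rabs_pos_eq by (left; apply Rinv_0_lt_compat; lra).
  eapply Rle_trans. apply Rmult_le_compat_l. left; apply Rinv_0_lt_compat; lra.
  apply remainder_bound; auto.
  right. field. lra.
Qed.

Definition D (k : nat) (f : C -> C) : C := Cderiv_n k f (0%R, 0%R).

Lemma normb_le b f M : (forall k, Cmod (D k f) / b ^ k <= M) -> Rbar_le (normb b f) (Finite M).
Proof.
  intros H. unfold normb. destruct (Lub_Rbar_correct (fun x => exists k, x = Cmod (Cderiv_n k f (0%R, 0%R)) / b ^ k)) as [_ H2].
  apply H2. intros x [k Hk]. subst. simpl. apply H.
Qed.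

Lemma normb_elem b f k : Rbar_le (Finite (Cmod (D k f) / b ^ k)) (normb b f).
Proof.
  unfold normb. destruct (Lub_Rbar_correct (fun x => exists k, x = Cmod (Cderiv_n k f (0%R, 0%R)) / b ^ k)) as [H1 _].
  apply H1. exists k. auto.
Qed.

Lemma normb_bound b f M : Rbar_le (normb b f) (Finite M) -> forall k, Cmod (D k f) / b ^ k <= M.
Proof.
  intros H k. generalize (Rbar_le_trans _ _ _ (normb_elem b f k) H). simpl. auto.
Qed.

Lemma normb_fin b f : Rbar_lt (normb b f) p_infty -> exists M, forall k, Cmod (D k f) / b ^ k <= M.
Proof.
  intros H. destruct (normb b f) eqn:E.
  - exists r. apply normb_bound. rewrite E. simpl. lra.
  - simpl in H. contradiction.
  - exfalso. generalize (normb_elem b f 0). rewrite E. simpl. auto.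
Qed.

Lemma normb_lt_bound b f eps : Rbar_lt (normb b f) (Finite eps) -> forall k, Cmod (D k f) / b ^ k <= eps.
Proof.
  intros H. apply normb_bound. destruct (normb b f); simpl in *; auto; lra.
Qed.

Lemma sup_disc_lt r h d : Rbar_lt (sup_disc r h) (Finite d) -> forall z, Cmod z <= r -> Cmod (h z) < d.
Proof.
  intros H z Hz. unfold sup_disc in H.
  destruct (Lub_Rbar_correct (fun x => exists z, Cmod z <= r /\ x = Cmod (h z))) as [H1 _].
  assert (H2 := H1 (Cmod (h z)) (ex_intro _ z (conj Hz eq_refl))).
  generalize (Rbar_le_lt_trans _ _ _ H2 H). simpl. auto.
Qed.

Lemma sup_disc_le r h K : (forall z, Cmod z <= r -> Cmod (h z) <= K) -> Rbar_le (sup_disc r h) (Finite K).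
Proof.
  intros H. unfold sup_disc.
  destruct (Lub_Rbar_correct (fun x => exists z, Cmod z <= r /\ x = Cmod (h z))) as [_ H2].
  apply H2. intros x [z [Hz E]]. subst. simpl. auto.
Qed.

Lemma hol_sub f g : hol f -> hol g -> hol (Csub_fun g f).
Proof. intros Hf Hg z. destruct (Hf z) as [a Ha], (Hg z) as [b Hb]. eexists. unfold Csub_fun. apply CD_minus; eauto. Qed.

Lemma hol_mul f g : hol f -> hol g -> hol (Cmul_fun f g).
Proof. intros Hf Hg z. destruct (Hf z) as [a Ha], (Hg z) as [b Hb]. eexists. unfold Cmul_fun. apply CD_mult; eauto. Qed.

Lemma cf_sub f g r k : hol f -> hol g -> 0 < r -> cf (Csub_fun g f) r k = (cf g r k - cf f r k)%C.
Proof.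
  intros Hf Hg Hr. unfold cf, Csub_fun.
  rewrite (CI_ext _ (fun t => g (circ r t) * (/ circ r t) ^ k - f (circ r t) * (/ circ r t) ^ k)%C) by (intros; ring).
  rewrite CI_minus. ring.
  all: apply Rfull_Icont; intros t; apply Rcont_mult; [apply Call_Rfull; apply hol_Call; auto|apply Rcont_pow; apply Rcont_inv_circ; auto].
Qed.

Lemma D_sub f g k : hol f -> hol g -> D k (Csub_fun g f) = (D k g - D k f)%C.
Proof.
  intros Hf Hg. unfold D. change (0%R, 0%R) with (RtoC 0).
  rewrite !(D_cf _ 1) by (auto; try lra; apply hol_sub; auto).
  rewrite cf_sub by (auto; lra). ring.
Qed.

Lemma INR_fact_pos k : 0 < INR (fact k).
Proof. apply lt_0_INR. apply lt_O_fact. Qed.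

Lemma cauchy_est h r k d : hol h -> 0 < r -> (forall t, Cmod (h (circ r t)) <= d) ->
  Cmod (D k h) <= INR (fact k) * d / r ^ k.
Proof.
  intros Hh Hr Hd. unfold D. change (0%R, 0%R) with (RtoC 0).
  rewrite (D_cf _ r) by auto. rewrite Cmod_mult, Cmod_R, Rabs_pos_eq by (left; apply INR_fact_pos).
  unfold Rdiv. rewrite Rmult_assoc. apply Rmult_le_compat_l. left; apply INR_fact_pos.
  assert (HPI : 0 < PI) by apply PI_RGT_0.
  unfold cf. rewrite Cmod_mult, Cmod_R, Rabs_pos_eq by (left; apply Rinv_0_lt_compat; lra).
  apply Rle_trans with (/ (2 * PI) * ((2 * PI - 0) * (d * / r ^ k))).
  - apply Rmult_le_compat_l. left; apply Rinv_0_lt_compat; lra.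
    apply CI_bound. lra.
    + apply Rfull_Icont; intros t; apply Rcont_mult; [apply Call_Rfull; apply hol_Call; auto|apply Rcont_pow; apply Rcont_inv_circ; auto].
    + intros t _. rewrite Cmod_mult, Cmod_pow, Cmod_inv, Cmod_circ by (try apply circ_neq0; auto; lra).
      rewrite <- Rinv_pow by lra. apply Rmult_le_compat_r. left; apply Rinv_0_lt_compat; apply pow_lt; auto. auto.
  - right. field. split. apply pow_nonzero. lra. lra.
Qed.

Fixpoint binom (n k : nat) : nat :=
  match n, k with
  | _, O => 1%nat
  | O, S _ => 0%nat
  | S n', S k' => (binom n' k' + binom n' (S k'))%nat
  end.

Lemma binom_0 n : binom n 0 = 1%nat.
Proof. destruct n; auto. Qed.

Lemma binom_big n k : (n < k)%nat -> binom n k = 0%nat.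
Proof.
  revert k. induction n; intros k Hk.
  - destruct k. lia. auto.
  - destruct k. lia. simpl. rewrite !IHn by lia. auto.
Qed.

Lemma csum_shift F N : csum F (S N) = (F 0%nat + csum (fun k => F (S k)) N)%C.
Proof. induction N; simpl. ring. simpl in IHN. rewrite IHN. ring. Qed.

Lemma csum_ext_lt F G N : (forall k, (k < N)%nat -> F k = G k) -> csum F N = csum G N.
Proof. intros H. induction N; simpl; auto. rewrite IHN. rewrite (H N) by lia. auto. intros; apply H; lia. Qed.

Lemma csum_plus F G N : csum (fun k => F k + G k)%C N = (csum F N + csum G N)%C.
Proof. induction N; simpl. ring. rewrite IHN. ring. Qed.

Lemma pascal_csum (a bb : nat -> C) n :
  csum (fun k => RtoC (INR (binom n k)) * (a (S k) * bb (n - k)%nat + a k * bb (S (n - k))))%C (S n) =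
  csum (fun k => RtoC (INR (binom (S n) k)) * (a k * bb (S n - k)%nat))%C (S (S n)).
Proof.
  rewrite (csum_shift _ (S n)). rewrite binom_0. simpl (S n - 0)%nat.
  rewrite (csum_ext (fun k => RtoC (INR (binom (S n) (S k))) * (a (S k) * bb (S n - S k)%nat))%C (fun k => RtoC (INR (binom n k)) * (a (S k) * bb (n - k)%nat) + RtoC (INR (binom n (S k))) * (a (S k) * bb (n - k)%nat))%C).
  2:{ intros k. simpl binom. rewrite plus_INR, RtoC_plus. simpl (S n - S k)%nat. ring. }
  rewrite (csum_ext (fun k => RtoC (INR (binom n k)) * (a (S k) * bb (n - k)%nat + a k * bb (S (n - k))))%C
     (fun k => RtoC (INR (binom n k)) * (a (S k) * bb (n - k)%nat) + RtoC (INR (binom n k)) * (a k * bb (S (n - k))))%C) by (intros; ring).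
  rewrite !csum_plus.
  rewrite (csum_shift (fun k => RtoC (INR (binom n k)) * (a k * bb (S (n - k))))%C n).
  rewrite binom_0. replace (S (n - 0)) with (S n) by lia.
  assert (E : csum (fun k => RtoC (INR (binom n (S k))) * (a (S k) * bb (n - k)%nat))%C (S n) =
              csum (fun k => RtoC (INR (binom n (S k))) * (a (S k) * bb (S (n - S k))))%C n).
  { simpl. rewrite binom_big by lia. simpl INR. 
    rewrite (csum_ext_lt _ (fun k => RtoC (INR (binom n (S k))) * (a (S k) * bb (S (n - S k))))%C n).
    ring. intros k Hk. replace (n - k)%nat with (S (n - S k)) by lia. auto. }
  rewrite E. simpl INR. ring.
Qed.

Lemma CD_csum (F : nat -> C -> C) (F' : nat -> C) z N :
  (forall k, CD (F k) z (F' k)) -> CD (fun w => csum (fun k => F k w) N) z (csum F' N).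
Proof.
  intros H. induction N; simpl.
  - apply CD_const.
  - apply CD_plus; auto.
Qed.

Lemma leibniz f g n : hol f -> hol g -> forall z,
  Cderiv_n n (Cmul_fun f g) z =
  csum (fun k => RtoC (INR (binom n k)) * (Cderiv_n k f z * Cderiv_n (n - k) g z))%C (S n).
Proof.
  intros Hf Hg. induction n; intros z.
  - simpl. unfold Cmul_fun. ring.
  - change (Cderiv_n (S n) (Cmul_fun f g) z) with (Cderiv (Cderiv_n n (Cmul_fun f g)) z).
    assert (Ef : Cderiv_n n (Cmul_fun f g) = fun w => csum (fun k => RtoC (INR (binom n k)) * (Cderiv_n k f w * Cderiv_n (n - k) g w))%C (S n)).
    { apply functional_extensionality. auto. }
    rewrite Ef. apply Cderiv_eq.
    eapply CD_eql. apply CD_csum. intros k. apply CD_scal. apply CD_mult; apply CD_Cderiv_n; auto.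
    rewrite <- (pascal_csum (fun k => Cderiv_n k f z) (fun j => Cderiv_n j g z)).
    apply csum_ext. intros k. ring.
Qed.

Lemma binomial_C (x y : C) n : ((x + y) ^ n = csum (fun k => RtoC (INR (binom n k)) * (x ^ k * y ^ (n - k)%nat)) (S n))%C.
Proof.
  induction n.
  - simpl. ring.
  - rewrite <- (pascal_csum (fun k => x ^ k)%C (fun j => y ^ j)%C).
    simpl Cpow at 1. rewrite IHn. rewrite csum_scal. apply csum_ext. intros k. simpl. ring.
Qed.

Fixpoint rsum (F : nat -> R) (N : nat) : R := match N with O => 0 | S n => rsum F n + F n end.

Lemma RtoC_rsum F N : RtoC (rsum F N) = csum (fun k => RtoC (F k)) N.
Proof. induction N; simpl; auto. rewrite RtoC_plus, IHN. auto. Qed.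

Lemma binomial_R (x y : R) n : (x + y) ^ n = rsum (fun k => INR (binom n k) * (x ^ k * y ^ (n - k)%nat)) (S n).
Proof.
  apply RtoC_inj. rewrite RtoC_rsum, RtoC_pow, RtoC_plus, binomial_C.
  apply csum_ext. intros k. rewrite !RtoC_mult, !RtoC_pow. auto.
Qed.

Lemma Cmod_csum F N : Cmod (csum F N) <= rsum (fun k => Cmod (F k)) N.
Proof. induction N; simpl. rewrite Cmod_0. lra. eapply Rle_trans. apply Cmod_triangle. lra. Qed.

Lemma rsum_le F G N : (forall k, F k <= G k) -> rsum F N <= rsum G N.
Proof. intros H. induction N; simpl. lra. generalize (H N). lra. Qed.

Lemma rsum_scal c F N : c * rsum F N = rsum (fun k => c * F k) N.
Proof. induction N; simpl. ring. rewrite <- IHN. ring. Qed.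

Lemma rsum_sum_f F N : rsum F (S N) = sum_f_R0 F N.
Proof. induction N; simpl. ring. simpl in IHN. rewrite IHN. auto. Qed.

Lemma A_hol a f : A_space a f -> hol f.
Proof. intros [H _]. apply entire_hol; auto. Qed.

Lemma A_bound a f b : A_space a f -> a < b -> 0 < b -> exists M, 0 <= M /\ forall k, Cmod (D k f) <= M * b ^ k.
Proof.
  intros [_ H] Hab Hb. destruct (normb_fin b f (H b Hab)) as [M HM].
  exists M. split.
  - generalize (HM 0%nat) (Cmod_ge_0 (D 0 f)). simpl. intros. unfold Rdiv in H0. rewrite Rinv_1, Rmult_1_r in H0. lra.
  - intros k. specialize (HM k). assert (0 < b ^ k) by (apply pow_lt; auto).
    apply (Rmult_le_compat_r (b ^ k)) in HM; [|lra]. unfold Rdiv in HM. rewrite Rmult_assoc, Rinv_l, Rmult_1_r in HM; lra.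
Qed.

Lemma div_le_of_le x y M : 0 < y -> x <= M * y -> x / y <= M.
Proof.
  intros Hy H. apply (Rmult_le_reg_r y); auto. unfold Rdiv. rewrite Rmult_assoc, Rinv_l, Rmult_1_r; lra.
Qed.

Lemma part3 a b f g : 0 <= a -> 0 <= b -> A_space a f -> A_space b g -> A_space (a + b) (Cmul_fun f g).
Proof.
  intros Ha Hb Hf Hg. split.
  { apply entire_hol. apply hol_mul; eapply A_hol; eauto. }
  intros c Hc. set (d := (c - a - b) / 2).
  assert (Hd : 0 < d) by (unfold d; lra).
  destruct (A_bound a f (a + d) Hf ltac:(lra) ltac:(lra)) as [M1 [HM1 H1]].
  destruct (A_bound b g (b + d) Hg ltac:(lra) ltac:(lra)) as [M2 [HM2 H2]].
  apply Rbar_le_lt_trans with (Finite (M1 * M2)); [|simpl; auto].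
  apply normb_le. intros n. apply div_le_of_le. apply pow_lt; lra.
  unfold D. change (0%R, 0%R) with (RtoC 0). rewrite leibniz by (eapply A_hol; eauto).
  eapply Rle_trans. apply Cmod_csum.
  replace c with ((a + d) + (b + d)) by (unfold d; field).
  rewrite binomial_R, rsum_scal. apply rsum_le. intros k.
  rewrite !Cmod_mult, Cmod_R, Rabs_pos_eq by apply pos_INR.
  specialize (H1 k). specialize (H2 (n - k)%nat). unfold D in H1, H2. change (0%R, 0%R) with (RtoC 0) in H1, H2.
  assert (0 <= INR (binom n k)) by apply pos_INR.
  assert (Cmod (Cderiv_n k f 0) * Cmod (Cderiv_n (n - k) g 0) <= (M1 * (a + d) ^ k) * (M2 * (b + d) ^ (n - k))).
  { apply Rmult_le_compat; auto using Cmod_ge_0. }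
  replace (M1 * M2 * (INR (binom n k) * ((a + d) ^ k * (b + d) ^ (n - k)))) with
    (INR (binom n k) * ((M1 * (a + d) ^ k) * (M2 * (b + d) ^ (n - k)))) by ring.
  apply Rmult_le_compat_l; auto.
Qed.

Lemma pow_n_Cpow (z : C) k : pow_n z k = (z ^ k)%C.
Proof. induction k; simpl; [auto|]. rewrite IHk. auto. Qed.

Lemma sum_n_csum (F : nat -> C) N : sum_n F N = csum F (S N).
Proof.
  induction N.
  - rewrite sum_O. simpl. ring.
  - rewrite sum_Sn, IHN. simpl. auto.
Qed.

Lemma mono_cf r j k : 0 < r ->
  cf (fun z => z ^ j)%C r k = if Nat.eqb j k then RtoC 1 else RtoC 0.
Proof.
  intros Hr. unfold cf. assert (HPI : 0 < PI) by apply PI_RGT_0.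
  destruct (Nat.eqb_spec j k) as [E|E].
  - subst. rewrite (CI_ext _ (fun _ => RtoC 1)).
    + rewrite CI_const. rewrite <- !RtoC_mult. f_equal. field. lra.
    + intros t _. generalize (circ_neq0 r t Hr). intros Hu. rewrite <- Cpow_mult_l.
      replace (circ r t * / circ r t)%C with (RtoC 1) by (field; auto). clear. induction k; simpl; auto. rewrite IHk. ring.
  - destruct (Compare_dec.lt_dec k j) as [L|L].
    + rewrite (CI_ext _ (fun t => (circ r t) ^ (j - k))%C).
      * rewrite CI_circ_pow by (auto; lia). ring.
      * intros t _. generalize (circ_neq0 r t Hr). intros Hu.
        replace j with (k + (j - k))%nat at 1 by lia. rewrite Cpow_add_r.
        replace (circ r t ^ k * circ r t ^ (j - k) * (/ circ r t) ^ k)%C with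
          ((circ r t * / circ r t) ^ k * circ r t ^ (j - k))%C by (rewrite Cpow_mult_l; ring).
        replace (circ r t * / circ r t)%C with (RtoC 1) by (field; auto).
        replace ((RtoC 1) ^ k)%C with (RtoC 1). ring. clear. induction k; simpl; auto. rewrite <- IHk. ring.
    + rewrite (CI_ext _ (fun t => (/ circ r t) ^ (k - j))%C).
      * rewrite CI_circ_invpow by (auto; lia). ring.
      * intros t _. generalize (circ_neq0 r t Hr). intros Hu.
        replace k with (j + (k - j))%nat at 1 by lia. rewrite Cpow_add_r.
        replace (circ r t ^ j * ((/ circ r t) ^ j * (/ circ r t) ^ (k - j)))%C with
          ((circ r t * / circ r t) ^ j * (/ circ r t) ^ (k - j))%C by (rewrite Cpow_mult_l; ring).
        replace (circ r t * / circ r t)%C with (RtoC 1) by (field; auto).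
        replace ((RtoC 1) ^ j)%C with (RtoC 1). ring. clear. induction j; simpl; auto. rewrite <- IHj. ring.
Qed.

Definition polyc (c : nat -> C) N (z : C) : C := csum (fun j => c j * z ^ j)%C N.

Lemma hol_polyc c N : hol (polyc c N).
Proof.
  intros z. eexists. unfold polyc. apply CD_csum. intros k. apply CD_scal. apply CD_pow.
Qed.

Lemma csum_delta (c : nat -> C) k N :
  csum (fun j => c j * (if Nat.eqb j k then RtoC 1 else RtoC 0))%C N = if Nat.ltb k N then c k else RtoC 0.
Proof.
  induction N; simpl. auto. rewrite IHN.
  destruct (Nat.eqb_spec N k) as [E|E]; destruct (Nat.ltb_spec k N) as [L|L]; destruct (Nat.ltb_spec k (S N)) as [L2|L2];
    try lia; try (subst; ring); ring.
Qed.

Lemma cf_polyc c N r k : 0 < r -> cf (polyc c N) r k = if Nat.ltb k N then c k else RtoC 0.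
Proof.
  intros Hr. rewrite <- csum_delta. rewrite <- (csum_ext (fun j => c j * cf (fun z => z ^ j)%C r k)%C).
  2:{ intros j. rewrite mono_cf; auto. }
  unfold cf, polyc.
  rewrite (CI_ext _ (fun t => csum (fun j => c j * (circ r t ^ j * (/ circ r t) ^ k)) N)%C).
  2:{ intros t _. rewrite Cmult_comm, csum_scal. apply csum_ext. intros j. ring. }
  rewrite CI_csum.
  - rewrite csum_scal. apply csum_ext. intros j. rewrite CI_scal. ring.
    apply Rfull_Icont. intros t. apply Rcont_mult. apply Rcont_pow. apply circ_cont. apply Rcont_pow. apply Rcont_inv_circ; auto.
  - intros j t. apply Rcont_mult. apply Rcont_const. apply Rcont_mult. apply Rcont_pow. apply circ_cont. apply Rcont_pow. apply Rcont_inv_circ; auto.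
Qed.

Lemma rsum_ge_term F N k : (forall i, 0 <= F i) -> (k < N)%nat -> F k <= rsum F N.
Proof.
  intros H Hk. induction N. lia. simpl. destruct (Nat.eq_dec k N).
  - subst. assert (0 <= rsum F N) by (clear - H; induction N; simpl; [lra| generalize (H N); lra]). lra.
  - generalize (H N). assert (k < N)%nat by lia. specialize (IHN H0). lra.
Qed.

Lemma eventually_small a f b eps : A_space a f -> 0 <= a -> a < b -> 0 < eps ->
  exists N, forall k, (N <= k)%nat -> Cmod (D k f) / b ^ k <= eps.
Proof.
  intros Hf Ha Hab He.
  set (b' := (a + b) / 2).
  destruct (A_bound a f b' Hf ltac:(unfold b'; lra) ltac:(unfold b'; lra)) as [M [HM HM']].
  set (q := b' / b).
  assert (Hq : 0 <= q < 1).
  { unfold q, b'. split. apply Rdiv_le_0_compat; lra. apply (Rmult_lt_reg_r b). lra.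
    unfold Rdiv. rewrite Rmult_assoc, Rinv_l; lra. }
  destruct (pow_lt_1_zero q ltac:(rewrite Rabs_pos_eq; lra) (eps / (M + 1)) ltac:(apply Rdiv_lt_0_compat; lra)) as [N HN].
  exists N. intros k Hk. specialize (HN k Hk). rewrite Rabs_pos_eq in HN by (apply pow_le; lra).
  assert (Hbk : 0 < b ^ k) by (apply pow_lt; lra).
  apply div_le_of_le; auto.
  eapply Rle_trans. apply HM'.
  assert (Eq : b' ^ k = q ^ k * b ^ k) by (unfold q; rewrite <- Rpow_mult_distr; f_equal; field; lra).
  rewrite Eq.
  assert (M * q ^ k <= eps).
  { apply Rle_trans with ((M + 1) * q ^ k). assert (0 <= q ^ k) by (apply pow_le; lra). nra.
    apply (Rmult_lt_compat_l (M + 1)) in HN; [|lra]. replace ((M + 1) * (eps / (M + 1))) with eps in HN by (field; lra). lra. }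
  nra.
Qed.

Lemma part1 a f bs eps : 0 <= a -> A_space a f -> List.Forall (fun b => a < b) bs -> 0 < eps ->
  exists p : C -> C, is_polynomial p /\ Ta_close bs eps f p.
Proof.
  intros Ha Hf Hbs He.
  assert (HN : exists N, List.Forall (fun b => forall k, (N <= k)%nat -> Cmod (D k f) / b ^ k <= eps / 2) bs).
  { induction Hbs as [|b bs Hb Hbs IH].
    - exists 0%nat. constructor.
    - destruct IH as [N1 H1]. destruct (eventually_small a f b (eps / 2) Hf Ha Hb ltac:(lra)) as [N2 H2].
      exists (Nat.max N1 N2). constructor.
      + intros k Hk. apply H2. lia.
      + eapply List.Forall_impl; [|apply H1]. intros b' Hb' k Hk. apply Hb'. lia. }
  destruct HN as [N HN].
  set (c := fun k => (D k f * RtoC (/ INR (fact k)))%C).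
  exists (fun z => sum_n (fun k => Cmult (c k) (pow_n z k)) N). split.
  { exists N, c. intros; auto. }
  assert (Ep : (fun z => sum_n (fun k => Cmult (c k) (pow_n z k)) N) = polyc c (S N)).
  { apply functional_extensionality. intros z. rewrite sum_n_csum. unfold polyc. apply csum_ext. intros k. rewrite pow_n_Cpow. auto. }
  rewrite Ep. unfold Ta_close.
  assert (Hfh : hol f) by (eapply A_hol; eauto).
  eapply List.Forall_impl; [|apply (List.Forall_and Hbs HN)]. intros b [Hab Hb].
  apply Rbar_le_lt_trans with (Finite (eps / 2)); [|simpl; lra].
  apply normb_le. intros k.
  assert (Hbk : 0 < b ^ k) by (apply pow_lt; lra).
  rewrite D_sub; auto. 2: apply hol_polyc.
  unfold D at 1. change (0%R, 0%R) with (RtoC 0). rewrite (D_cf _ 1) by (auto; try lra; apply hol_polyc).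
  rewrite cf_polyc by lra.
  destruct (Nat.ltb_spec k (S N)) as [L|L].
  - unfold c.
    assert (E : (RtoC (INR (fact k)) * (D k f * RtoC (/ INR (fact k))) - D k f = RtoC 0)%C).
    { replace (RtoC (INR (fact k)) * (D k f * RtoC (/ INR (fact k))) - D k f)%C
        with (D k f * RtoC (INR (fact k) * / INR (fact k)) - D k f)%C by (rewrite RtoC_mult; ring).
      rewrite Rinv_r by (generalize (INR_fact_pos k); lra). ring. }
    rewrite E, Cmod_0. unfold Rdiv. rewrite Rmult_0_l. lra.
  - replace (INR (fact k) * 0 - D k f)%C with (- D k f)%C by ring. rewrite Cmod_opp. apply Hb. lia.
Qed.

Lemma rsum_nonneg F N : (forall i, 0 <= F i) -> 0 <= rsum F N.
Proof. intros H. induction N; simpl. lra. generalize (H N). lra. Qed.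

Lemma part2a_single a B f b eps : 0 <= a -> bounded_in_A a B -> B f -> a < b -> 0 < eps ->
  exists d, 0 < d /\ forall g, B g -> (forall t, Cmod (Csub_fun g f (circ 1 t)) <= d) ->
    Rbar_lt (normb b (Csub_fun g f)) (Finite eps).
Proof.
  intros Ha [HBA HBb] Hf Hab He.
  set (b' := (a + b) / 2).
  destruct (HBb b' ltac:(unfold b'; lra)) as [Cb HCb].
  assert (Hb' : 0 < b') by (unfold b'; lra).
  assert (HBk : forall g, B g -> forall k, Cmod (D k g) <= Cb * b' ^ k).
  { intros g Hg k. generalize (normb_bound b' g Cb (HCb g Hg) k). intros H.
    assert (0 < b' ^ k) by (apply pow_lt; lra).
    apply (Rmult_le_compat_r (b' ^ k)) in H; [|lra]. unfold Rdiv in H. rewrite Rmult_assoc, Rinv_l, Rmult_1_r in H; lra. }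
  assert (HCb0 : 0 <= Cb) by (generalize (HBk f Hf 0%nat) (Cmod_ge_0 (D 0 f)); simpl; lra).
  set (q := b' / b).
  assert (Hq : 0 <= q < 1).
  { unfold q, b'. split. apply Rdiv_le_0_compat; lra. apply (Rmult_lt_reg_r b). lra.
    unfold Rdiv. rewrite Rmult_assoc, Rinv_l; lra. }
  destruct (pow_lt_1_zero q ltac:(rewrite Rabs_pos_eq; lra) (eps / (2 * (2 * Cb + 1))) ltac:(apply Rdiv_lt_0_compat; lra)) as [N HN].
  assert (Hb0 : 0 < b) by lra.
  assert (Hterm : forall i, 0 <= INR (fact i) / b ^ i).
  { intros i. left. apply Rdiv_lt_0_compat. apply INR_fact_pos. apply pow_lt; auto. }
  set (S := rsum (fun k => INR (fact k) / b ^ k) N).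
  assert (HS : 0 <= S) by (unfold S; apply rsum_nonneg; auto).
  exists (eps / (2 * (S + 1))). split. apply Rdiv_lt_0_compat; lra.
  intros g Hg Hd.
  assert (Hgh : hol g) by (eapply A_hol; eauto). assert (Hfh : hol f) by (eapply A_hol; eauto).
  apply Rbar_le_lt_trans with (Finite (eps / 2)); [|simpl; lra].
  apply normb_le. intros k.
  assert (Hbk : 0 < b ^ k) by (apply pow_lt; lra).
  destruct (Compare_dec.lt_dec k N) as [L|L].
  - generalize (cauchy_est (Csub_fun g f) 1 k _ (hol_sub f g Hfh Hgh) Rlt_0_1 Hd). rewrite pow1. intros H.
    apply div_le_of_le; auto.
    eapply Rle_trans. apply H.
    assert (INR (fact k) / b ^ k <= S) by (unfold S; apply (rsum_ge_term (fun k => INR (fact k) / b ^ k)); auto).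
    assert (E : INR (fact k) * (eps / (2 * (S + 1))) / 1 = (INR (fact k) / b ^ k) * (eps / (2 * (S + 1))) * b ^ k) by (field; lra).
    rewrite E. apply Rmult_le_compat_r. lra.
    apply Rle_trans with (S * (eps / (2 * (S + 1)))). apply Rmult_le_compat_r; auto. left; apply Rdiv_lt_0_compat; lra.
    apply Rle_trans with ((S + 1) * (eps / (2 * (S + 1)))). apply Rmult_le_compat_r. left; apply Rdiv_lt_0_compat; lra. lra.
    right. field. lra.
  - specialize (HN k ltac:(lia)). rewrite Rabs_pos_eq in HN by (apply pow_le; lra).
    rewrite D_sub by auto.
    apply div_le_of_le; auto.
    eapply Rle_trans. apply Cmod_tri3.
    generalize (HBk g Hg k) (HBk f Hf k). intros H1 H2.
    assert (Eq : b' ^ k = q ^ k * b ^ k) by (unfold q; rewrite <- Rpow_mult_distr; f_equal; field; lra).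
    rewrite Eq in H1, H2.
    assert (2 * Cb * q ^ k <= eps / 2).
    { apply Rle_trans with ((2 * Cb + 1) * q ^ k). assert (0 <= q ^ k) by (apply pow_le; lra). nra.
      apply (Rmult_lt_compat_l (2 * Cb + 1)) in HN; [|lra].
      replace ((2 * Cb + 1) * (eps / (2 * (2 * Cb + 1)))) with (eps / 2) in HN by (field; lra). lra. }
    nra.
Qed.

Lemma part2a a B f bs eps : 0 <= a -> bounded_in_A a B -> B f -> List.Forall (fun b => a < b) bs -> 0 < eps ->
  exists r delta : R, 0 <= r /\ 0 < delta /\ forall g, B g -> cc_close r delta f g -> Ta_close bs eps f g.
Proof.
  intros Ha HB Hf Hbs He.
  assert (H : exists d, 0 < d /\ forall g, B g -> (forall t, Cmod (Csub_fun g f (circ 1 t)) <= d) -> Ta_close bs eps f g).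
  { induction Hbs as [|b bs Hb Hbs IH].
    - exists 1. split. lra. intros. constructor.
    - destruct IH as [d1 [Hd1 H1]]. destruct (part2a_single a B f b eps Ha HB Hf Hb He) as [d2 [Hd2 H2]].
      exists (Rmin d1 d2). split. apply Rmin_pos; auto.
      intros g Hg Hc. constructor.
      + apply H2; auto. intros t. eapply Rle_trans. apply Hc. apply Rmin_r.
      + apply H1; auto. intros t. eapply Rle_trans. apply Hc. apply Rmin_l. }
  destruct H as [d [Hd H]]. exists 1, d. split. lra. split. auto.
  intros g Hg Hc. apply H; auto. intros t. left. apply (sup_disc_lt 1 _ d Hc).
  rewrite Cmod_circ; lra.
Qed.

Lemma taylor_sum_bound h R z N b d : hol h -> 0 < R -> 0 < b -> 0 <= d ->
  (forall k, Cmod (D k h) <= d * b ^ k) ->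
  Cmod (csum (fun k => z ^ k * cf h R k)%C N) <= d * exp (b * Cmod z).
Proof.
  intros Hh HR Hb Hd HD.
  eapply Rle_trans. apply Cmod_csum.
  apply Rle_trans with (rsum (fun k => d * ((b * Cmod z) ^ k / INR (fact k))) N).
  - apply rsum_le. intros k. rewrite Cmod_mult, Cmod_pow.
    generalize (D_cf h R k Hh HR). intros E.
    assert (Ecf : cf h R k = (D k h * RtoC (/ INR (fact k)))%C).
    { unfold D. change (0%R, 0%R) with (RtoC 0). rewrite E.
      replace (RtoC (INR (fact k)) * cf h R k * RtoC (/ INR (fact k)))%C
        with (cf h R k * RtoC (INR (fact k) * / INR (fact k)))%C by (rewrite RtoC_mult; ring).
      rewrite Rinv_r by (generalize (INR_fact_pos k); lra). ring. }
    rewrite Ecf, Cmod_mult, Cmod_R, Rabs_pos_eq by (left; apply Rinv_0_lt_compat, INR_fact_pos).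
    rewrite Rpow_mult_distr.
    assert (0 <= Cmod z ^ k) by (apply pow_le, Cmod_ge_0).
    assert (0 < / INR (fact k)) by (apply Rinv_0_lt_compat, INR_fact_pos).
    specialize (HD k).
    replace (d * (b ^ k * Cmod z ^ k / INR (fact k))) with (Cmod z ^ k * ((d * b ^ k) * / INR (fact k))) by (unfold Rdiv; ring).
    apply Rmult_le_compat_l; auto. apply Rmult_le_compat_r; lra.
  - rewrite <- rsum_scal. apply Rmult_le_compat_l; auto.
    destruct N. simpl. left. apply exp_pos.
    rewrite rsum_sum_f. apply exp_ge_taylor. apply Rmult_le_pos; [lra|apply Cmod_ge_0].
Qed.

Lemma part2b a B f r eps : 0 <= a -> bounded_in_A a B -> B f -> 0 <= r -> 0 < eps ->
  exists (bs : list R) (delta : R), List.Forall (fun b => a < b) bs /\ 0 < delta /\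
    forall g, B g -> Ta_close bs delta f g -> cc_close r eps f g.
Proof.
  intros Ha [HBA HBb] Hf Hr He.
  set (b := a + 1). assert (Hb : 0 < b) by (unfold b; lra).
  exists (List.cons b List.nil), (eps / (2 * exp (b * r))).
  assert (Hexp : 0 < exp (b * r)) by apply exp_pos.
  split. constructor. unfold b; lra. constructor.
  split. apply Rdiv_lt_0_compat; lra.
  intros g Hg HT. apply List.Forall_inv in HT.
  assert (Hfh : hol f) by (eapply A_hol; eauto). assert (Hgh : hol g) by (eapply A_hol; eauto).
  set (h := Csub_fun g f). assert (Hh : hol h) by (apply hol_sub; auto).
  set (d := eps / (2 * exp (b * r))). assert (Hd : 0 < d) by (unfold d; apply Rdiv_lt_0_compat; lra).
  assert (HD : forall k, Cmod (D k h) <= d * b ^ k).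
  { intros k. generalize (normb_lt_bound b h d HT k). intros H.
    assert (0 < b ^ k) by (apply pow_lt; lra).
    apply (Rmult_le_compat_r (b ^ k)) in H; [|lra]. unfold Rdiv in H. rewrite Rmult_assoc, Rinv_l, Rmult_1_r in H; lra. }
  unfold cc_close. apply Rbar_le_lt_trans with (Finite (eps / 2)); [|simpl; lra].
  apply sup_disc_le. intros z Hz. fold h.
  set (R := r + 1). assert (HR : 0 < R) by (unfold R; lra). assert (HzR : Cmod z < R) by (unfold R; lra).
  destruct (Rfull_bounded (fun t => h (circ R t)) 0 (2 * PI) ltac:(generalize PI_RGT_0; lra) (Call_Rfull h R (hol_Call h Hh)))
    as [M [HM HM']].
  assert (Hbound : Cmod (h z) <= d * exp (b * r)).
  { apply (tail_lemma _ _ (M * (R / (R - Cmod z))) (Cmod z / R)).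
    - split. apply Rdiv_le_0_compat; [apply Cmod_ge_0|lra].
      apply (Rmult_lt_reg_r R); auto. unfold Rdiv. rewrite Rmult_assoc, Rinv_l; lra.
    - intros N.
      replace (h z) with ((h z - csum (fun k => z ^ k * cf h R k)%C N) + csum (fun k => z ^ k * cf h R k)%C N)%C by ring.
      eapply Rle_trans. apply Cmod_triangle.
      generalize (taylor h R z N M Hh HR HzR HM'). intros T1.
      generalize (taylor_sum_bound h R z N b d Hh HR Hb ltac:(lra) HD). intros T2.
      assert (d * exp (b * Cmod z) <= d * exp (b * r)).
      { apply Rmult_le_compat_l. lra. destruct (Rle_lt_or_eq_dec _ _ Hz) as [L|E].
        left. apply exp_increasing. apply Rmult_lt_compat_l; auto. rewrite E; lra. }
      lra. }
  unfold d in Hbound. replace (eps / (2 * exp (b * r)) * exp (b * r)) with (eps / 2) in Hbound by (field; lra). auto.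
Qed.

Theorem theorem1p1 : forall a : R, 0 <= a ->
  (forall f : C -> C, A_space a f ->
     forall (bs : list R) (eps : R), List.Forall (fun b => a < b) bs -> 0 < eps ->
       exists p : C -> C, is_polynomial p /\ Ta_close bs eps f p)
  /\
  (forall B : (C -> C) -> Prop, bounded_in_A a B ->
     forall f : C -> C, B f ->
       (forall (bs : list R) (eps : R), List.Forall (fun b => a < b) bs -> 0 < eps ->
          exists r delta : R, 0 <= r /\ 0 < delta /\
            forall g, B g -> cc_close r delta f g -> Ta_close bs eps f g)
       /\
       (forall r eps : R, 0 <= r -> 0 < eps ->
          exists (bs : list R) (delta : R), List.Forall (fun b => a < b) bs /\ 0 < delta /\
            forall g, B g -> Ta_close bs delta f g -> cc_close r eps f g))
  /\
  (forall (b : R) (f g : C -> C), 0 <= b -> A_space a f -> A_space b g ->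
     A_space (a + b) (Cmul_fun f g)).
Proof.
  intros a Ha. split; [|split].
  - intros f Hf bs eps Hbs He. apply (part1 a); auto.
  - intros B HB f Hf. split.
    + intros bs eps Hbs He. apply (part2a a B); auto.
    + intros r eps Hr He. apply (part2b a B); auto.
  - intros b f g Hb Hf Hg. apply part3; auto.
Qed.
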